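(* Let $\omega\in\mathbb C$ with $|\omega|=1$ and let $m\ge1$ be an integer. Then $L_{m,\omega}=\frac im\big(\mathrm{Log}(\omega\mathbf1-L^m)-\mathrm{Log}(\bar\omega\mathbf1-L^{*m})\big)$ is a time operator of $N$ with dense CCR-domain $\mathrm D(NL_{m,\omega})\cap\mathrm D(L_{m,\omega}N)$, i.e. $[N,L_{m,\omega}]=-i\mathbf1$ on this domain.
   Context: $\ell^2=\ell^2(\mathbb N)$, $\mathbb N=\{0,1,\dots\}$, basis $(\xi_n)$; $N\xi_n=n\xi_n$ (self-adjoint, maximal domain); $L$ left shift ($L\xi_n=\xi_{n-1}$, $L\xi_0=0$), $L^*$ right shift. For a linear operator $A$ and $\omega\ne0$: $\mathrm D(\mathrm{Log}(\omega\mathbf1-A))=\{\varphi\in\bigcap_{k\ge0}\mathrm D(A^k):\lim_K\sum_{k=1}^K\frac1k(\omega^{-1}A)^k\varphi\text{ exists}\}$ and $\mathrm{Log}(\omega\mathbf1-A)\varphi=\log(\omega)\varphi-\sum_{k\ge1}\frac1k(\omega^{-1}A)^k\varphi$, with $\log\omega$ a fixed (e.g. principal) logarithm. $L_{m,\omega}$ is defined on the intersection of the two domains. A time operator of a self-adjoint $H$ is a symmetric operator $T$ with $[H,T]=-i\mathbf1$ on some nonzero subspace (CCR-domain) of $\mathrm D(HT)\cap\mathrm D(TH)$. *)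

(* Defs.v *)
From Stdlib Require Import Reals.
From Coquelicot Require Import Coquelicot.
Open Scope R_scope.

(* Sequences indexed by N = {0,1,...}; vectors of l^2(N) are those with
   square-summable moduli.  xi_n is the n-th standard basis vector. *)
Definition vec := nat -> C.
Definition vzero : vec := fun _ => RtoC 0.
Definition vadd (x y : vec) : vec := fun n => Cplus (x n) (y n).
Definition vsub (x y : vec) : vec := fun n => Cminus (x n) (y n).
Definition vscal (c : C) (x : vec) : vec := fun n => Cmult c (x n).

Definition in_l2 (x : vec) : Prop := ex_series (fun n => Cmod (x n) ^ 2).
Definition l2norm (x : vec) : R := sqrt (Series (fun n => Cmod (x n) ^ 2)).
(* <x, y> = sum_n conj(x_n) y_n  (antilinear in the first slot) *)
Definition inner (x y : vec) : C :=
  (Series (fun n => Re (Cmult (Cconj (x n)) (y n))),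
   Series (fun n => Im (Cmult (Cconj (x n)) (y n)))).

Definition dense (D : vec -> Prop) : Prop :=
  forall x, in_l2 x -> forall eps, 0 < eps ->
    exists y, D y /\ l2norm (vsub x y) < eps.

Record op := mkOp { dom : vec -> Prop ; app : vec -> vec }.

Definition op_id : op := mkOp in_l2 (fun x => x).
Definition op_comp (A B : op) : op :=
  mkOp (fun x => dom B x /\ dom A (app B x)) (fun x => app A (app B x)).
Fixpoint op_pow (A : op) (k : nat) : op :=
  match k with O => op_id | S k => op_comp A (op_pow A k) end.
Definition op_scal (c : C) (A : op) : op :=
  mkOp (dom A) (fun x => vscal c (app A x)).
Definition op_sub (A B : op) : op :=
  mkOp (fun x => dom A x /\ dom B x) (fun x => vsub (app A x) (app B x)).

Definition Nop : op :=
  mkOp (fun x => in_l2 x /\ in_l2 (fun n => Cmult (RtoC (INR n)) (x n)))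
       (fun x => fun n => Cmult (RtoC (INR n)) (x n)).
(* Left shift L xi_n = xi_{n-1}, L xi_0 = 0, i.e. (Lx)_n = x_{n+1}. *)
Definition Lsh : op := mkOp in_l2 (fun x => fun n => x (S n)).
(* Right shift L^* xi_n = xi_{n+1}, i.e. (L^*x)_0 = 0, (L^*x)_{n+1} = x_n. *)
Definition Rsh : op :=
  mkOp in_l2 (fun x => fun n => match n with O => RtoC 0 | S k => x k end).

Definition Cexp (z : C) : C :=
  (exp (Re z) * cos (Im z), exp (Re z) * sin (Im z)).
Definition is_log (lg : C -> C) : Prop :=
  forall z, z <> RtoC 0 -> Cexp (lg z) = z.

Fixpoint log_psum (w : C) (A : op) (x : vec) (K : nat) : vec :=
  match K with
  | O => vzero
  | S K' => vadd (log_psum w A x K')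
                 (vscal (RtoC (/ INR (S K'))) (app (op_pow (op_scal (Cinv w) A) (S K')) x))
  end.
Definition l2_conv (s : nat -> vec) : Prop :=
  exists y, in_l2 y /\ is_lim_seq (fun K => l2norm (vsub (s K) y)) 0.
(* pointwise limit (coincides with the l^2 limit when the latter exists) *)
Definition vlim (s : nat -> vec) : vec :=
  fun n => (real (Lim_seq (fun K => Re (s K n))), real (Lim_seq (fun K => Im (s K n)))).

(* Log(w 1 - A), with log w given by the fixed logarithm lg. *)
Definition Log (lg : C -> C) (w : C) (A : op) : op :=
  mkOp (fun x => (forall k, dom (op_pow A k) x) /\ l2_conv (log_psum w A x))
       (fun x => vsub (vscal (lg w) x) (vlim (log_psum w A x))).

Definition Lmw (lg : C -> C) (m : nat) (w : C) : op :=
  op_scal (Cdiv Ci (RtoC (INR m)))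
    (op_sub (Log lg w (op_pow Lsh m)) (Log lg (Cconj w) (op_pow Rsh m))).

Definition symmetric (T : op) : Prop :=
  dense (dom T) /\
  forall x y, dom T x -> dom T y -> inner (app T x) y = inner x (app T y).

Definition subspace (D : vec -> Prop) : Prop :=
  D vzero /\ (forall x y, D x -> D y -> D (vadd x y)) /\
  (forall c x, D x -> D (vscal c x)).

Definition time_operator (H T : op) (D : vec -> Prop) : Prop :=
  symmetric T /\ subspace D /\ (exists x, D x /\ x <> vzero) /\
  (forall x, D x -> dom (op_comp H T) x /\ dom (op_comp T H) x) /\
  (forall x, D x -> vsub (app H (app T x)) (app T (app H x)) = vscal (Copp Ci) x).

(* Main.v *)
Require Import Defs.
From Stdlib Require Import Reals Lra Lia FunctionalExtensionality.
From Coquelicot Require Import Coquelicot.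
Open Scope R_scope.

Lemma ex_series_le_R (a b : nat -> R) :
  (forall n, 0 <= a n <= b n) -> ex_series b -> ex_series a.
Proof.
  intros H Hb. apply (ex_series_le a b); auto.
  intros n. change (norm (a n)) with (Rabs (a n)). rewrite Rabs_pos_eq; apply H.
Qed.

Lemma series_ge_partial (a : nat -> R) N :
  (forall k, 0 <= a k) -> ex_series a -> sum_f_R0 a N <= Series a.
Proof.
  intros Hp He. apply sum_incr; auto.
  apply Series_correct in He. apply is_series_Reals in He. exact He.
Qed.

Lemma series_ge0 (a : nat -> R) : (forall k, 0 <= a k) -> ex_series a -> 0 <= Series a.
Proof.
  intros Hp He. apply Rle_trans with (sum_f_R0 a 0). simpl; auto.
  apply series_ge_partial; auto.
Qed.

Lemma series_ge_term (a : nat -> R) n :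
  (forall k, 0 <= a k) -> ex_series a -> a n <= Series a.
Proof.
  intros Hp He. apply Rle_trans with (sum_f_R0 a n).
  destruct n. simpl; lra. rewrite tech5.
  assert (0 <= sum_f_R0 a n) by (apply cond_pos_sum; auto). lra.
  apply series_ge_partial; auto.
Qed.

Lemma series_tail (F : nat -> R) :
  (forall k, 0 <= F k) -> ex_series F ->
  forall eps, 0 < eps -> exists K0, forall K, (K0 <= K)%nat ->
    Series (fun k => F (K + k)%nat) < eps.
Proof.
  intros Hp He eps Heps.
  assert (Hc := Series_correct _ He). apply is_series_Reals in Hc.
  destruct (Hc eps Heps) as [N HN].
  exists (S N). intros K HK.
  destruct K as [|K]; [lia|].
  specialize (HN K ltac:(lia)). unfold R_dist in HN.
  pose proof (Series_incr_n F (S K) ltac:(lia) He) as E. simpl pred in E.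
  assert (H0: 0 <= Series (fun k => F (S K + k)%nat)).
  { apply series_ge0; auto. apply ex_series_incr_n; auto. }
  rewrite E in HN.
  replace (sum_f_R0 F K - (sum_f_R0 F K + Series (fun k : nat => F (S K + k)%nat)))
    with (- Series (fun k : nat => F (S K + k)%nat)) in HN by ring.
  rewrite Rabs_Ropp, Rabs_pos_eq in HN by lra. lra.
Qed.

Lemma ex_series_inv_sq : ex_series (fun n => / (INR n + 1) ^ 2).
Proof.
  apply ex_series_le_R with (fun n => 2 * (/ (INR n + 1) - / (INR n + 2))).
  { intros n. assert (0 <= INR n) by apply pos_INR. split.
    apply Rlt_le, Rinv_0_lt_compat. nra.
    assert (E: / (INR n + 1) - / (INR n + 2) = / ((INR n + 1) * (INR n + 2))) by (field; lra).
    rewrite E. apply Rmult_le_reg_l with ((INR n + 1)^2 * (INR n + 2)). nra.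
    field_simplify; try lra; try nra. }
  apply (ex_series_scal (V:=R_NormedModule) 2 (fun n => / (INR n + 1) - / (INR n + 2))).
  exists 1. apply is_series_Reals. intros eps Heps.
  assert (Hs : forall N, sum_f_R0 (fun n => / (INR n + 1) - / (INR n + 2)) N = 1 - / (INR N + 2)).
  { induction N. simpl. field. rewrite tech5, IHN. rewrite S_INR. field.
    split; assert (0 <= INR N) by apply pos_INR; lra. }
  destruct (archimed (/ eps)) as [H1 _].
  destruct (INR_unbounded (/ eps)) as [N0 HN0].
  exists N0. intros n Hn. unfold R_dist. rewrite Hs.
  assert (0 <= INR n) by apply pos_INR.
  assert (INR N0 <= INR n) by (apply le_INR; lia).
  replace (1 - / (INR n + 2) - 1) with (- / (INR n + 2)) by ring.
  rewrite Rabs_Ropp, Rabs_pos_eq by (apply Rlt_le, Rinv_0_lt_compat; lra).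
  rewrite <- (Rinv_inv eps). apply Rinv_lt_contravar.
  apply Rmult_lt_0_compat. apply Rinv_0_lt_compat; lra. lra. lra.
Qed.

Lemma ex_series_zero : ex_series (fun _ : nat => 0).
Proof.
  apply (ex_series_ext (V:=R_NormedModule) (fun n => / (INR n + 1) ^ 2 * 0)). intros; simpl; ring.
  apply ex_series_scal_r. apply ex_series_inv_sq.
Qed.

Lemma exs_ext (a b : nat -> R) : (forall n, a n = b n) -> ex_series a -> ex_series b.
Proof. intros H. apply (ex_series_ext (V:=R_NormedModule)); auto. Qed.

Lemma Cmod_sq_add (a b : C) : Cmod (Cplus a b) ^ 2 <= 2 * Cmod a ^ 2 + 2 * Cmod b ^ 2.
Proof.
  rewrite !Cmod2_alt. destruct a as [a1 a2], b as [b1 b2]. unfold Re, Im; simpl.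
  pose proof (pow2_ge_0 (a1 - b1)); pose proof (pow2_ge_0 (a2 - b2)). nra.
Qed.

Lemma Cmod_sq_mult (a b : C) : Cmod (Cmult a b) ^ 2 = Cmod a ^ 2 * Cmod b ^ 2.
Proof. rewrite Cmod_mult. ring. Qed.

Lemma Cmod_sq_ge0 (a : C) : 0 <= Cmod a ^ 2.
Proof. apply pow2_ge_0. Qed.

Lemma in_l2_zero : in_l2 vzero.
Proof.
  unfold in_l2, vzero. apply exs_ext with (fun _ => 0).
  intros n. rewrite Cmod_0. ring. apply ex_series_zero.
Qed.

Lemma in_l2_add x y : in_l2 x -> in_l2 y -> in_l2 (vadd x y).
Proof.
  unfold in_l2, vadd. intros Hx Hy.
  apply ex_series_le_R with (fun n => 2 * Cmod (x n) ^ 2 + 2 * Cmod (y n) ^ 2).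
  intros n; split; [apply Cmod_sq_ge0| apply Cmod_sq_add].
  apply (ex_series_plus (V:=R_NormedModule)).
  apply (ex_series_scal (V:=R_NormedModule) 2 (fun n => Cmod (x n) ^2)); auto.
  apply (ex_series_scal (V:=R_NormedModule) 2 (fun n => Cmod (y n) ^2)); auto.
Qed.

Lemma in_l2_scal c x : in_l2 x -> in_l2 (vscal c x).
Proof.
  unfold in_l2, vscal. intros Hx.
  apply exs_ext with (fun n => Cmod c ^ 2 * Cmod (x n) ^ 2).
  intros n; rewrite Cmod_sq_mult; auto.
  apply (ex_series_scal (V:=R_NormedModule) (Cmod c ^ 2) (fun n => Cmod (x n) ^2)); auto.
Qed.

Lemma vsub_eq x y : vsub x y = vadd x (vscal (RtoC (-1)) y).
Proof. apply functional_extensionality; intros n. unfold vsub, vadd, vscal. ring. Qed.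

Lemma in_l2_sub x y : in_l2 x -> in_l2 y -> in_l2 (vsub x y).
Proof. intros. rewrite vsub_eq. apply in_l2_add; auto. apply in_l2_scal; auto. Qed.

Lemma in_l2_fin x P : (forall n, (P <= n)%nat -> x n = RtoC 0) -> in_l2 x.
Proof.
  intros H. unfold in_l2. apply (ex_series_incr_n _ P).
  apply exs_ext with (fun _ => 0).
  intros n. rewrite H by lia. rewrite Cmod_0. ring. apply ex_series_zero.
Qed.

Lemma in_l2_ext x y : (forall n, x n = y n) -> in_l2 x -> in_l2 y.
Proof. intros H. replace y with x; auto. apply functional_extensionality; auto. Qed.



Lemma l2norm_sq x : in_l2 x -> l2norm x ^ 2 = Series (fun n => Cmod (x n) ^ 2).
Proof.
  intros H. unfold l2norm. rewrite <- Rsqr_pow2. apply Rsqr_sqrt.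
  apply series_ge0; auto. intros; apply Cmod_sq_ge0.
Qed.

Lemma l2norm_ge0 x : 0 <= l2norm x.
Proof. apply sqrt_pos. Qed.

Lemma Cmod_le_l2norm x n : in_l2 x -> Cmod (x n) <= l2norm x.
Proof.
  intros H. unfold l2norm. rewrite <- (sqrt_pow2 (Cmod (x n))) by apply Cmod_ge_0.
  apply sqrt_le_1_alt. apply (series_ge_term (fun n => Cmod (x n) ^ 2)); auto.
  intros; apply Cmod_sq_ge0.
Qed.

Lemma l2norm_scal c x : in_l2 x -> l2norm (vscal c x) = Cmod c * l2norm x.
Proof.
  intros H. unfold l2norm, vscal.
  rewrite (Series_ext _ (fun n => Cmod c ^ 2 * Cmod (x n) ^ 2)) by (intros; apply Cmod_sq_mult).
  rewrite Series_scal_l. rewrite sqrt_mult. rewrite sqrt_pow2 by apply Cmod_ge_0. auto.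
  apply pow2_ge_0. apply series_ge0; auto. intros; apply Cmod_sq_ge0.
Qed.

Lemma l2norm_add_le x y : in_l2 x -> in_l2 y ->
  l2norm (vadd x y) <= sqrt 2 * (l2norm x + l2norm y).
Proof.
  intros Hx Hy.
  assert (Hxy := in_l2_add x y Hx Hy).
  apply Rsqr_incr_0_var. 2:{ apply Rmult_le_pos. apply sqrt_pos.
    pose proof (l2norm_ge0 x); pose proof (l2norm_ge0 y); lra. }
  rewrite !Rsqr_pow2. rewrite l2norm_sq by auto.
  replace ((sqrt 2 * (l2norm x + l2norm y)) ^ 2) with
    (sqrt 2 ^ 2 * (l2norm x + l2norm y) ^ 2) by ring.
  rewrite <- Rsqr_pow2, Rsqr_sqrt by lra.
  apply Rle_trans with (2 * l2norm x ^ 2 + 2 * l2norm y ^ 2).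
  2:{ pose proof (l2norm_ge0 x); pose proof (l2norm_ge0 y). nra. }
  rewrite !l2norm_sq by auto.
  rewrite <- !Series_scal_l. rewrite <- Series_plus.
  apply Series_le. intros n; split; [apply Cmod_sq_ge0|]. apply Cmod_sq_add.
  apply (ex_series_plus (V:=R_NormedModule)).
  apply (ex_series_scal (V:=R_NormedModule) 2 (fun n => Cmod (x n) ^2)); auto.
  apply (ex_series_scal (V:=R_NormedModule) 2 (fun n => Cmod (y n) ^2)); auto.
  apply (ex_series_scal (V:=R_NormedModule) 2 (fun n => Cmod (x n) ^2)); auto.
  apply (ex_series_scal (V:=R_NormedModule) 2 (fun n => Cmod (y n) ^2)); auto.
Qed.

Definition Clim (u : nat -> C) (l : C) : Prop :=
  is_lim_seq (fun n => fst (u n)) (fst l) /\ is_lim_seq (fun n => snd (u n)) (snd l).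

Lemma Clim_ext u v l : (forall n, u n = v n) -> Clim u l -> Clim v l.
Proof.
  intros H [H1 H2]; split; eapply is_lim_seq_ext; eauto; intros n; simpl; rewrite H; auto.
Qed.

Lemma Clim_const c : Clim (fun _ => c) c.
Proof. split; apply is_lim_seq_const. Qed.

Lemma Clim_plus u v a b : Clim u a -> Clim v b -> Clim (fun n => Cplus (u n) (v n)) (Cplus a b).
Proof.
  intros [H1 H2] [H3 H4]; split; simpl.
  apply (is_lim_seq_plus' _ _ _ _ H1 H3).
  apply (is_lim_seq_plus' _ _ _ _ H2 H4).
Qed.

Lemma lim_scal_fin (u : nat -> R) c l : is_lim_seq u (Finite l) -> is_lim_seq (fun n => c * u n) (Finite (c * l)).
Proof. intros H. apply (is_lim_seq_scal_l u c l) in H. exact H. Qed.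

Lemma Clim_scal c u a : Clim u a -> Clim (fun n => Cmult c (u n)) (Cmult c a).
Proof.
  intros [H1 H2]; destruct c as [c1 c2]; destruct a as [a1 a2]; split.
  - apply is_lim_seq_ext with (fun n => c1 * fst (u n) - c2 * snd (u n)).
    intros n; destruct (u n); simpl; ring.
    change (fst (Cmult (c1, c2) (a1, a2))) with (c1 * a1 - c2 * a2).
    apply is_lim_seq_minus'; apply lim_scal_fin; auto.
  - apply is_lim_seq_ext with (fun n => c1 * snd (u n) + c2 * fst (u n)).
    intros n; destruct (u n); simpl; ring.
    change (snd (Cmult (c1, c2) (a1, a2))) with (c1 * a2 + c2 * a1).
    apply is_lim_seq_plus'; apply lim_scal_fin; auto.
Qed.

Lemma Clim_minus u v a b : Clim u a -> Clim v b -> Clim (fun n => Cminus (u n) (v n)) (Cminus a b).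
Proof.
  intros Ha Hb. apply (Clim_ext (fun n => Cplus (u n) (Cmult (RtoC (-1)) (v n)))).
  intros; unfold Cminus; ring.
  replace (Cminus a b) with (Cplus a (Cmult (RtoC (-1)) b)) by (unfold Cminus; ring).
  apply Clim_plus; auto. apply Clim_scal; auto.
Qed.

Lemma Clim_unique u a b : Clim u a -> Clim u b -> a = b.
Proof.
  intros [H1 H2] [H3 H4].
  apply is_lim_seq_unique in H1, H2, H3, H4.
  rewrite H1 in H3; rewrite H2 in H4. injection H3; injection H4; intros.
  destruct a, b; simpl in *; subst; auto.
Qed.

Lemma Clim_shift u a k : Clim u a -> Clim (fun n => u (n + k)%nat) a.
Proof.
  intros [H1 H2]; split.
  apply (is_lim_seq_incr_n (fun n => fst (u n)) k) in H1. exact H1.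
  apply (is_lim_seq_incr_n (fun n => snd (u n)) k) in H2. exact H2.
Qed.

Lemma Clim_shift_inv u a k : Clim (fun n => u (n + k)%nat) a -> Clim u a.
Proof.
  intros [H1 H2]; split.
  apply (is_lim_seq_incr_n (fun n => fst (u n)) k). exact H1.
  apply (is_lim_seq_incr_n (fun n => snd (u n)) k). exact H2.
Qed.

Lemma vlim_eq (s : nat -> vec) y : (forall n, Clim (fun K => s K n) (y n)) -> vlim s = y.
Proof.
  intros H. apply functional_extensionality; intros n. destruct (H n) as [H1 H2].
  unfold vlim. apply is_lim_seq_unique in H1, H2. simpl in *.
  unfold Re, Im. rewrite H1, H2. simpl. destruct (y n); auto.
Qed.

Lemma lim_from_diff (u : nat -> R) c : is_lim_seq (fun K => u K - c) 0 -> is_lim_seq u c.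
Proof.
  intros H. apply is_lim_seq_ext with (fun K => (u K - c) + c). intros; ring.
  pose proof (is_lim_seq_plus' _ _ 0 c H (is_lim_seq_const c)) as H2.
  replace (0 + c) with c in H2 by ring. exact H2.
Qed.

Lemma fst_le_Cmod z : Rabs (fst z) <= Cmod z.
Proof. apply re_le_Cmod. Qed.
Lemma snd_le_Cmod z : Rabs (snd z) <= Cmod z.
Proof.
  destruct z as [a b]. unfold Cmod; simpl. rewrite <- sqrt_Rsqr_abs. apply sqrt_le_1_alt.
  unfold Rsqr. nra.
Qed.

Lemma l2_pointwise (s : nat -> vec) y :
  (forall K, in_l2 (s K)) -> in_l2 y ->
  is_lim_seq (fun K => l2norm (vsub (s K) y)) 0 ->
  forall n, Clim (fun K => s K n) (y n).
Proof.
  intros Hs Hy Hl n.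
  assert (Hb : forall K, Cmod (Cminus (s K n) (y n)) <= l2norm (vsub (s K) y)).
  { intros K. apply (Cmod_le_l2norm (vsub (s K) y)). apply in_l2_sub; auto. }
  assert (Hl' : is_lim_seq (fun K => - l2norm (vsub (s K) y)) 0).
  { apply is_lim_seq_opp in Hl. simpl in Hl. replace (- 0) with 0 in Hl by ring. exact Hl. }
  split.
  - apply lim_from_diff.
    apply is_lim_seq_le_le with (2:=Hl') (3:=Hl). intros K.
    pose proof (fst_le_Cmod (Cminus (s K n) (y n))) as Ha. pose proof (Hb K).
    change (fst (Cminus (s K n) (y n))) with (fst (s K n) - fst (y n)) in Ha.
    apply Rabs_le_between. lra.
  - apply lim_from_diff.
    apply is_lim_seq_le_le with (2:=Hl') (3:=Hl). intros K.
    pose proof (snd_le_Cmod (Cminus (s K n) (y n))) as Ha. pose proof (Hb K).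
    change (snd (Cminus (s K n) (y n))) with (snd (s K n) - snd (y n)) in Ha.
    apply Rabs_le_between. lra.
Qed.

Definition good (A : op) : Prop :=
  (forall y, dom A y <-> in_l2 y) /\ (forall y, in_l2 y -> in_l2 (app A y)).
Definition lin (A : op) : Prop :=
  (forall x y, app A (vadd x y) = vadd (app A x) (app A y)) /\
  (forall c x, app A (vscal c x) = vscal c (app A x)).

Lemma good_id : good op_id.
Proof. split; simpl; tauto. Qed.

Lemma good_comp A B : good A -> good B -> good (op_comp A B).
Proof.
  intros [HA1 HA2] [HB1 HB2]. split; simpl.
  - intros y; rewrite HB1; split; [tauto|]. intros H; split; auto. apply HA1; auto.
  - auto.
Qed.

Lemma good_pow A k : good A -> good (op_pow A k).
Proof. intros H; induction k; simpl. apply good_id. apply good_comp; auto. Qed.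

Lemma good_scal c A : good A -> good (op_scal c A).
Proof. intros [H1 H2]; split; simpl; auto. intros; apply in_l2_scal; auto. Qed.

Lemma good_Lsh : good Lsh.
Proof.
  split; simpl; [tauto|]. intros y Hy. unfold in_l2 in *.
  apply (ex_series_incr_1 (fun n => Cmod (y n) ^ 2)) in Hy. exact Hy.
Qed.

Lemma good_Rsh : good Rsh.
Proof.
  split; simpl; [tauto|]. intros y Hy. unfold in_l2 in *.
  apply (ex_series_incr_1 (V:=R_NormedModule)). simpl. exact Hy.
Qed.

Lemma lin_id : lin op_id.
Proof. split; reflexivity. Qed.

Lemma lin_comp A B : lin A -> lin B -> lin (op_comp A B).
Proof. intros [H1 H2] [H3 H4]; split; simpl; intros. rewrite H3, H1; auto. rewrite H4, H2; auto. Qed.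

Lemma lin_pow A k : lin A -> lin (op_pow A k).
Proof. intros H; induction k; simpl. apply lin_id. apply lin_comp; auto. Qed.

Lemma lin_scal c A : lin A -> lin (op_scal c A).
Proof.
  intros [H1 H2]; split; simpl; intros.
  - rewrite H1. apply functional_extensionality; intros n; unfold vscal, vadd; ring.
  - rewrite H2. apply functional_extensionality; intros n; unfold vscal, vadd; ring.
Qed.

Lemma lin_Lsh : lin Lsh.
Proof. split; reflexivity. Qed.

Lemma lin_Rsh : lin Rsh.
Proof.
  split; simpl; intros; apply functional_extensionality; intros n; unfold vscal, vadd;
  destruct n; auto; ring.
Qed.

Fixpoint cpow (c : C) (k : nat) : C :=
  match k with O => RtoC 1 | S k => Cmult c (cpow c k) end.

Lemma cpow_mod c k : Cmod c = 1 -> Cmod (cpow c k) = 1.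
Proof. intros H; induction k; simpl. rewrite Cmod_R, Rabs_R1; auto. rewrite Cmod_mult, H, IHk; ring. Qed.

Lemma app_Lpow m x n : app (op_pow Lsh m) x n = x (n + m)%nat.
Proof.
  revert n; induction m; intros n; simpl. f_equal; lia.
  rewrite IHm. f_equal; lia.
Qed.

Lemma app_LL m c k x n :
  app (op_pow (op_scal c (op_pow Lsh m)) k) x n = Cmult (cpow c k) (x (n + m * k)%nat).
Proof.
  revert n; induction k; intros n; simpl. rewrite Nat.mul_0_r, Nat.add_0_r. ring.
  unfold vscal. rewrite app_Lpow, IHk. replace (n + m + m * k)%nat with (n + m * S k)%nat by lia. ring.
Qed.

Lemma app_Rpow m x n :
  app (op_pow Rsh m) x n = if (m <=? n)%nat then x (n - m)%nat else RtoC 0.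
Proof.
  revert n; induction m; intros n; simpl. f_equal; lia.
  destruct n. reflexivity. rewrite IHm. simpl. reflexivity.
Qed.

Lemma app_RR m c k x n :
  app (op_pow (op_scal c (op_pow Rsh m)) k) x n =
  Cmult (cpow c k) (if (m * k <=? n)%nat then x (n - m * k)%nat else RtoC 0).
Proof.
  revert n; induction k; intros n; simpl.
  rewrite Nat.mul_0_r. simpl. rewrite Nat.sub_0_r. ring.
  unfold vscal. rewrite app_Rpow.
  destruct (Nat.leb_spec m n).
  - rewrite IHk. destruct (Nat.leb_spec (m * k) (n - m)); destruct (Nat.leb_spec (m * S k) n); try lia.
    replace (n - m - m * k)%nat with (n - m * S k)%nat by lia. ring. ring.
  - destruct (Nat.leb_spec (m * S k) n); try lia. ring.
Qed.

Fixpoint sumK (f : nat -> C) (K : nat) : C :=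
  match K with O => RtoC 0 | S K => Cplus (sumK f K) (f (S K)) end.

Lemma sumK_ext f g K : (forall k, (1 <= k <= K)%nat -> f k = g k) -> sumK f K = sumK g K.
Proof. induction K; simpl; intros H; auto. rewrite (H (S K)) by lia. rewrite IHK; auto. intros; apply H; lia. Qed.

Lemma sumK_plus f g K : sumK (fun k => Cplus (f k) (g k)) K = Cplus (sumK f K) (sumK g K).
Proof. induction K; simpl. ring. rewrite IHK. ring. Qed.

Lemma sumK_scal c f K : sumK (fun k => Cmult c (f k)) K = Cmult c (sumK f K).
Proof. induction K; simpl. ring. rewrite IHK. ring. Qed.

Lemma psum_coord w' A x K n :
  log_psum w' A x K n =
  sumK (fun k => Cmult (RtoC (/ INR k)) (app (op_pow (op_scal (Cinv w') A) k) x n)) K.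
Proof. induction K; simpl. reflexivity. unfold vadd, vscal. rewrite IHK. reflexivity. Qed.

Lemma psum_good w' A x K : good A -> in_l2 x -> in_l2 (log_psum w' A x K).
Proof.
  intros HA Hx. induction K. apply in_l2_zero.
  change (log_psum w' A x (S K)) with (vadd (log_psum w' A x K)
    (vscal (RtoC (/ INR (S K))) (app (op_pow (op_scal (Cinv w') A) (S K)) x))).
  apply in_l2_add; auto. apply in_l2_scal. apply (good_pow _ (S K) (good_scal _ _ HA)); auto.
Qed.

Lemma psum_lin w' A : lin A ->
  (forall x y K, log_psum w' A (vadd x y) K = vadd (log_psum w' A x K) (log_psum w' A y K)) /\
  (forall c x K, log_psum w' A (vscal c x) K = vscal c (log_psum w' A x K)).
Proof.
  intros HA. assert (HP : forall k, lin (op_pow (op_scal (Cinv w') A) k)).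
  { intros; apply lin_pow, lin_scal; auto. }
  split.
  - intros x y K; induction K; simpl.
    apply functional_extensionality; intros; unfold vzero, vadd; ring.
    rewrite IHK. destruct (HP (S K)) as [H1 _]. simpl in H1. rewrite H1.
    apply functional_extensionality; intros; unfold vzero, vadd, vscal; ring.
  - intros c x K; induction K; simpl.
    apply functional_extensionality; intros; unfold vzero, vscal; ring.
    rewrite IHK. destruct (HP (S K)) as [_ H2]. simpl in H2. rewrite H2.
    apply functional_extensionality; intros; unfold vzero, vadd, vscal; ring.
Qed.

Definition conv_to (s : nat -> vec) (y : vec) : Prop :=
  in_l2 y /\ is_lim_seq (fun K => l2norm (vsub (s K) y)) 0.

Lemma conv_vlim s y : (forall K, in_l2 (s K)) -> conv_to s y ->
  vlim s = y /\ forall n, Clim (fun K => s K n) (y n).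
Proof.
  intros Hs [Hy Hl]. assert (H := l2_pointwise s y Hs Hy Hl). split; auto. apply vlim_eq; auto.
Qed.

Lemma conv_add s t ys yt : (forall K, in_l2 (s K)) -> (forall K, in_l2 (t K)) ->
  conv_to s ys -> conv_to t yt -> conv_to (fun K => vadd (s K) (t K)) (vadd ys yt).
Proof.
  intros Hs Ht [Hys Hs'] [Hyt Ht']. split. apply in_l2_add; auto.
  apply is_lim_seq_le_le with (fun _ => 0)
    (fun K => sqrt 2 * (l2norm (vsub (s K) ys) + l2norm (vsub (t K) yt))).
  - intros K. split. apply l2norm_ge0.
    replace (vsub (vadd (s K) (t K)) (vadd ys yt)) with (vadd (vsub (s K) ys) (vsub (t K) yt)).
    apply l2norm_add_le; apply in_l2_sub; auto.
    apply functional_extensionality; intros; unfold vsub, vadd; ring.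
  - apply is_lim_seq_const.
  - replace (Finite 0) with (Finite (sqrt 2 * (0 + 0))) by (f_equal; ring).
    apply lim_scal_fin. apply is_lim_seq_plus'; auto.
Qed.

Lemma conv_scal s y c : (forall K, in_l2 (s K)) ->
  conv_to s y -> conv_to (fun K => vscal c (s K)) (vscal c y).
Proof.
  intros Hs [Hy Hl]. split. apply in_l2_scal; auto.
  apply is_lim_seq_ext with (fun K => Cmod c * l2norm (vsub (s K) y)).
  - intros K. rewrite <- l2norm_scal by (apply in_l2_sub; auto). f_equal.
    apply functional_extensionality; intros; unfold vsub, vscal; ring.
  - replace (Finite 0) with (Finite (Cmod c * 0)) by (f_equal; ring). apply lim_scal_fin; auto.
Qed.

Lemma l2norm_zero_vec y : in_l2 y -> l2norm (vsub y y) = 0.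
Proof.
  intros Hy. replace (vsub y y) with (vscal (RtoC 0) y).
  rewrite l2norm_scal by auto. rewrite Cmod_0; ring.
  apply functional_extensionality; intros; unfold vsub, vscal; ring.
Qed.

Lemma conv_ev s y K0 : in_l2 y -> (forall K, (K0 <= K)%nat -> s K = y) -> conv_to s y.
Proof.
  intros Hy H. split; auto. apply (is_lim_seq_incr_n _ K0).
  apply is_lim_seq_ext with (fun _ => 0). intros K. rewrite H by lia.
  rewrite l2norm_zero_vec; auto. apply is_lim_seq_const.
Qed.

Lemma Log_dom lg w' A x : good A ->
  (dom (Log lg w' A) x <-> in_l2 x /\ l2_conv (log_psum w' A x)).
Proof.
  intros HA. simpl. split.
  - intros [H1 H2]. split; auto. apply (proj1 (proj1 (good_pow A 0 HA) x)). apply H1.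
  - intros [H1 H2]. split; auto. intros k. apply (proj2 (proj1 (good_pow A k HA) x)). auto.
Qed.

Lemma Log_add lg w' A x y : good A -> lin A ->
  dom (Log lg w' A) x -> dom (Log lg w' A) y ->
  dom (Log lg w' A) (vadd x y) /\
  app (Log lg w' A) (vadd x y) = vadd (app (Log lg w' A) x) (app (Log lg w' A) y).
Proof.
  intros HA HL Hx Hy. rewrite Log_dom in Hx, Hy by auto.
  destruct Hx as [Hx [yx Cx]], Hy as [Hy [yy Cy]].
  destruct (psum_lin w' A HL) as [Ladd _].
  assert (Px : forall K, in_l2 (log_psum w' A x K)) by (intros; apply psum_good; auto).
  assert (Py : forall K, in_l2 (log_psum w' A y K)) by (intros; apply psum_good; auto).
  assert (C := conv_add _ _ _ _ Px Py Cx Cy).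
  assert (Pxy : forall K, in_l2 (log_psum w' A (vadd x y) K)) by (intros; apply psum_good; auto; apply in_l2_add; auto).
  assert (C' : conv_to (log_psum w' A (vadd x y)) (vadd yx yy)).
  { replace (log_psum w' A (vadd x y)) with (fun K => vadd (log_psum w' A x K) (log_psum w' A y K)); auto.
    apply functional_extensionality; intros; rewrite Ladd; auto. }
  split.
  - rewrite Log_dom by auto. split. apply in_l2_add; auto. exists (vadd yx yy); auto.
  - simpl. rewrite (proj1 (conv_vlim _ _ Pxy C')), (proj1 (conv_vlim _ _ Px Cx)), (proj1 (conv_vlim _ _ Py Cy)).
    apply functional_extensionality; intros; unfold vsub, vadd, vscal; ring.
Qed.

Lemma Log_scal lg w' A c x : good A -> lin A ->
  dom (Log lg w' A) x ->
  dom (Log lg w' A) (vscal c x) /\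
  app (Log lg w' A) (vscal c x) = vscal c (app (Log lg w' A) x).
Proof.
  intros HA HL Hx. rewrite Log_dom in Hx by auto.
  destruct Hx as [Hx [yx Cx]].
  destruct (psum_lin w' A HL) as [_ Lsc].
  assert (Px : forall K, in_l2 (log_psum w' A x K)) by (intros; apply psum_good; auto).
  assert (C := conv_scal _ _ c Px Cx).
  assert (Pxy : forall K, in_l2 (log_psum w' A (vscal c x) K)) by (intros; apply psum_good; auto; apply in_l2_scal; auto).
  assert (C' : conv_to (log_psum w' A (vscal c x)) (vscal c yx)).
  { replace (log_psum w' A (vscal c x)) with (fun K => vscal c (log_psum w' A x K)); auto.
    apply functional_extensionality; intros; rewrite Lsc; auto. }
  split.
  - rewrite Log_dom by auto. split. apply in_l2_scal; auto. exists (vscal c yx); auto.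
  - simpl. rewrite (proj1 (conv_vlim _ _ Pxy C')), (proj1 (conv_vlim _ _ Px Cx)).
    apply functional_extensionality; intros; unfold vsub, vadd, vscal; ring.
Qed.

Lemma Log_l2 lg w' A x : good A -> dom (Log lg w' A) x -> in_l2 (app (Log lg w' A) x).
Proof.
  intros HA Hx. rewrite Log_dom in Hx by auto. destruct Hx as [Hx [y Cy]].
  assert (Px : forall K, in_l2 (log_psum w' A x K)) by (intros; apply psum_good; auto).
  simpl. rewrite (proj1 (conv_vlim _ _ Px Cy)). apply in_l2_sub. apply in_l2_scal; auto. apply Cy.
Qed.

Definition opT (g : C) (A B : op) : op := op_scal g (op_sub A B).

Lemma opT_add g A B x y :
  (forall x y, dom A x -> dom A y -> dom A (vadd x y) /\ app A (vadd x y) = vadd (app A x) (app A y)) ->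
  (forall x y, dom B x -> dom B y -> dom B (vadd x y) /\ app B (vadd x y) = vadd (app B x) (app B y)) ->
  dom (opT g A B) x -> dom (opT g A B) y ->
  dom (opT g A B) (vadd x y) /\ app (opT g A B) (vadd x y) = vadd (app (opT g A B) x) (app (opT g A B) y).
Proof.
  intros HA HB [Ax Bx] [Ay By]. destruct (HA x y Ax Ay) as [A1 A2], (HB x y Bx By) as [B1 B2].
  split. split; auto. simpl. rewrite A2, B2. apply functional_extensionality; intros; unfold vsub, vadd, vscal; ring.
Qed.

Lemma opT_scal g A B c x :
  (forall c x, dom A x -> dom A (vscal c x) /\ app A (vscal c x) = vscal c (app A x)) ->
  (forall c x, dom B x -> dom B (vscal c x) /\ app B (vscal c x) = vscal c (app B x)) ->
  dom (opT g A B) x ->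
  dom (opT g A B) (vscal c x) /\ app (opT g A B) (vscal c x) = vscal c (app (opT g A B) x).
Proof.
  intros HA HB [Ax Bx]. destruct (HA c x Ax) as [A1 A2], (HB c x Bx) as [B1 B2].
  split. split; auto. simpl. rewrite A2, B2. apply functional_extensionality; intros; unfold vsub, vadd, vscal; ring.
Qed.

Lemma N_add x y : dom Nop x -> dom Nop y -> dom Nop (vadd x y) /\ app Nop (vadd x y) = vadd (app Nop x) (app Nop y).
Proof.
  intros [H1 H2] [H3 H4]. simpl in *. split. split. apply in_l2_add; auto.
  eapply in_l2_ext; [|apply (in_l2_add _ _ H2 H4)]. intros; unfold vadd; simpl; ring.
  apply functional_extensionality; intros; unfold vadd; ring.
Qed.

Lemma N_scal c x : dom Nop x -> dom Nop (vscal c x) /\ app Nop (vscal c x) = vscal c (app Nop x).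
Proof.
  intros [H1 H2]. simpl in *. split. split. apply in_l2_scal; auto.
  eapply in_l2_ext; [|apply (in_l2_scal c _ H2)]. intros; unfold vscal; simpl; ring.
  apply functional_extensionality; intros; unfold vscal; ring.
Qed.

Lemma good_Lm m : good (op_pow Lsh m).
Proof. apply good_pow, good_Lsh. Qed.
Lemma good_Rm m : good (op_pow Rsh m).
Proof. apply good_pow, good_Rsh. Qed.
Lemma lin_Lm m : lin (op_pow Lsh m).
Proof. apply lin_pow, lin_Lsh. Qed.
Lemma lin_Rm m : lin (op_pow Rsh m).
Proof. apply lin_pow, lin_Rsh. Qed.

Lemma T_add lg m w x y : dom (Lmw lg m w) x -> dom (Lmw lg m w) y ->
  dom (Lmw lg m w) (vadd x y) /\ app (Lmw lg m w) (vadd x y) = vadd (app (Lmw lg m w) x) (app (Lmw lg m w) y).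
Proof.
  apply (opT_add (Cdiv Ci (RtoC (INR m))) (Log lg w (op_pow Lsh m)) (Log lg (Cconj w) (op_pow Rsh m))).
  intros; apply Log_add; auto using good_Lm, lin_Lm.
  intros; apply Log_add; auto using good_Rm, lin_Rm.
Qed.

Lemma T_scal lg m w c x : dom (Lmw lg m w) x ->
  dom (Lmw lg m w) (vscal c x) /\ app (Lmw lg m w) (vscal c x) = vscal c (app (Lmw lg m w) x).
Proof.
  apply (opT_scal (Cdiv Ci (RtoC (INR m))) (Log lg w (op_pow Lsh m)) (Log lg (Cconj w) (op_pow Rsh m))).
  intros; apply Log_scal; auto using good_Lm, lin_Lm.
  intros; apply Log_scal; auto using good_Rm, lin_Rm.
Qed.

Lemma T_l2 lg m w x : dom (Lmw lg m w) x -> in_l2 (app (Lmw lg m w) x).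
Proof.
  intros [H1 H2]. simpl. apply in_l2_scal. apply in_l2_sub.
  apply (Log_l2 lg w _ x (good_Lm m)); auto.
  apply (Log_l2 lg (Cconj w) _ x (good_Rm m)); auto.
Qed.

Definition Dm lg m w : vec -> Prop :=
  fun x => dom (op_comp Nop (Lmw lg m w)) x /\ dom (op_comp (Lmw lg m w) Nop) x.

Lemma D_add lg m w x y : Dm lg m w x -> Dm lg m w y -> Dm lg m w (vadd x y).
Proof.
  intros [[Tx NTx] [Nx TNx]] [[Ty NTy] [Ny TNy]].
  destruct (T_add lg m w x y Tx Ty) as [T1 T2].
  destruct (N_add x y Nx Ny) as [N1 N2].
  split; split; auto.
  - change (dom Nop (app (Lmw lg m w) (vadd x y))). rewrite T2. apply N_add; auto.
  - change (dom (Lmw lg m w) (app Nop (vadd x y))). rewrite N2. apply T_add; auto.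
Qed.

Lemma D_scal lg m w c x : Dm lg m w x -> Dm lg m w (vscal c x).
Proof.
  intros [[Tx NTx] [Nx TNx]].
  destruct (T_scal lg m w c x Tx) as [T1 T2].
  destruct (N_scal c x Nx) as [N1 N2].
  split; split; auto.
  - change (dom Nop (app (Lmw lg m w) (vscal c x))). rewrite T2. apply N_scal; auto.
  - change (dom (Lmw lg m w) (app Nop (vscal c x))). rewrite N2. apply T_scal; auto.
Qed.

Lemma w_facts w : Cmod w = 1 ->
  Cmult w (Cconj w) = RtoC 1 /\ Cinv w = Cconj w /\ Cinv (Cconj w) = w /\ w <> RtoC 0.
Proof.
  intros H. assert (E : Cmult w (Cconj w) = RtoC 1).
  { rewrite <- Cmod2_conj, H. unfold RtoC. f_equal; ring. }
  assert (Hw : w <> RtoC 0).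
  { intros ->. rewrite Cmod_0 in H. lra. }
  assert (Hc : Cconj w <> RtoC 0).
  { intros E'. rewrite E' in E. assert (E2: Cmult w (RtoC 0) = RtoC 0) by ring. rewrite E2 in E.
    injection E. lra. }
  repeat split; auto.
  - replace (Cinv w) with (Cmult (Cinv w) (Cmult w (Cconj w))) by (rewrite E; ring). field. auto.
  - replace (Cinv (Cconj w)) with (Cmult (Cinv (Cconj w)) (Cmult w (Cconj w))) by (rewrite E; ring). field. auto.
Qed.

Ltac Cring := apply injective_projections; simpl; ring.
Ltac Cfield := apply injective_projections; simpl; field.

Lemma sumK_shift f K : sumK f (S K) = Cplus (f 1%nat) (sumK (fun k => f (S k)) K).
Proof.
  induction K. simpl. ring.
  change (sumK f (S (S K))) with (Cplus (sumK f (S K)) (f (S (S K)))).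
  rewrite IHK. simpl. ring.
Qed.

Lemma sumK_S f K : sumK f (S K) = Cplus (sumK f K) (f (S K)).
Proof. reflexivity. Qed.

Lemma Log_lim lg w' A x : good A -> dom (Log lg w' A) x ->
  forall n, Clim (fun K => log_psum w' A x K n) (vlim (log_psum w' A x) n).
Proof.
  intros HA Hx. rewrite Log_dom in Hx by auto. destruct Hx as [Hx [y Cy]].
  assert (Px : forall K, in_l2 (log_psum w' A x K)) by (intros; apply psum_good; auto).
  destruct (conv_vlim _ _ Px Cy) as [E L]. rewrite E. auto.
Qed.

Lemma Clim_S u a : Clim u a -> Clim (fun K => u (S K)) a.
Proof. intros H. apply (Clim_shift _ _ 1) in H. eapply Clim_ext; [|exact H]. intros; simpl; rewrite Nat.add_1_r; reflexivity. Qed.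

Lemma F_zero (F : vec) w m : in_l2 F -> Cmod w = 1 -> (1 <= m)%nat ->
  (forall n, F (n + m)%nat = Cmult w (F n)) -> forall n, F n = RtoC 0.
Proof.
  intros HF Hw Hm Hrec n.
  assert (Hk : forall k, Cmod (F (n + m * k)%nat) ^ 2 = Cmod (F n) ^ 2).
  { induction k. rewrite Nat.mul_0_r, Nat.add_0_r; auto.
    replace (n + m * S k)%nat with ((n + m * k) + m)%nat by lia.
    rewrite Hrec, Cmod_mult, Hw, Rmult_1_l; auto. }
  assert (L := ex_series_lim_0 _ HF).
  apply (is_lim_seq_subseq _ _ (fun k => n + m * k)%nat) in L.
  2:{ apply eventually_subseq. intros; lia. }
  apply is_lim_seq_ext with (v := fun _ => Cmod (F n) ^ 2) in L; auto.
  apply is_lim_seq_unique in L. rewrite Lim_seq_const in L. injection L; intros E.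
  apply Cmod_eq_0. simpl in E. nra.
Qed.

Section Comm.
Variables (lg : C -> C) (m : nat) (w : C) (x : vec).
Hypothesis Hw : Cmod w = 1.
Hypothesis Hm : (1 <= m)%nat.

Let c1 := Cinv w.
Let c2 := Cinv (Cconj w).
Let Nx := app Nop x.

Definition GK K n := sumK (fun k => Cmult (cpow (Cinv w) k) (x (n + m * k)%nat)) K.
Definition HK K n := sumK (fun k => Cmult (cpow (Cinv (Cconj w)) k)
   (if (m * k <=? n)%nat then x (n - m * k)%nat else RtoC 0)) K.

Lemma w_nz : fst w * fst w + snd w * snd w <> 0.
Proof.
  intros E. unfold Cmod in Hw. replace (fst w ^ 2 + snd w ^ 2) with 0 in Hw by (rewrite <- E; ring).
  rewrite sqrt_0 in Hw. lra.
Qed.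

Lemma w_nz2 : fst w * fst w + - snd w * - snd w <> 0.
Proof. pose proof w_nz. replace (- snd w * - snd w) with (snd w * snd w) by ring. auto. Qed.

Lemma INRm_ne : INR m <> 0.
Proof. apply not_0_INR. lia. Qed.

Lemma psumL_coord w' y K n : log_psum w' (op_pow Lsh m) y K n =
  sumK (fun k => Cmult (RtoC (/ INR k)) (Cmult (cpow (Cinv w') k) (y (n + m * k)%nat))) K.
Proof. rewrite psum_coord. apply sumK_ext. intros. rewrite app_LL. reflexivity. Qed.

Lemma psumR_coord w' y K n : log_psum w' (op_pow Rsh m) y K n =
  sumK (fun k => Cmult (RtoC (/ INR k)) (Cmult (cpow (Cinv w') k)
     (if (m * k <=? n)%nat then y (n - m * k)%nat else RtoC 0))) K.
Proof. rewrite psum_coord. apply sumK_ext. intros. rewrite app_RR. reflexivity. Qed.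

Lemma GK_id K n :
  GK K n = Cmult (RtoC (- / INR m))
    (Cminus (Cmult (RtoC (INR n)) (log_psum w (op_pow Lsh m) x K n))
            (log_psum w (op_pow Lsh m) (app Nop x) K n)).
Proof.
  rewrite !psumL_coord. unfold GK. pose proof INRm_ne. simpl app.
  induction K. simpl. Cring.
  rewrite sumK_S. rewrite IHK. rewrite !sumK_S.
  rewrite plus_INR, mult_INR.
  assert (INR (S K) <> 0) by (apply not_0_INR; lia).
  generalize (cpow (/ w) (S K)) (x (n + m * S K)%nat). intros a b.
  generalize (sumK (fun k : nat => (/ INR k * (cpow (/ w) k * x (n + m * k)%nat))%C) K).
  generalize (sumK (fun k : nat => (/ INR k * (cpow (/ w) k * (INR (n + m * k) * x (n + m * k)%nat)))%C) K).
  intros s1 s2. Cfield; repeat split; auto using w_nz, w_nz2; try (destruct K; [lra | pose proof (pos_INR K); lra]).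
Qed.

Lemma HK_id K n :
  HK K n = Cmult (RtoC (/ INR m))
    (Cminus (Cmult (RtoC (INR n)) (log_psum (Cconj w) (op_pow Rsh m) x K n))
            (log_psum (Cconj w) (op_pow Rsh m) (app Nop x) K n)).
Proof.
  rewrite !psumR_coord. unfold HK. pose proof INRm_ne. simpl app.
  induction K. simpl. Cring.
  rewrite sumK_S. rewrite IHK. rewrite !sumK_S.
  assert (INR (S K) <> 0) by (apply not_0_INR; lia).
  generalize (sumK (fun k : nat => (/ INR k * (cpow (/ Cconj w) k *
       (if (m * k <=? n)%nat then x (n - m * k)%nat else 0)))%C) K).
  generalize (sumK (fun k : nat => (/ INR k * (cpow (/ Cconj w) k *
       (if (m * k <=? n)%nat then (INR (n - m * k) * x (n - m * k)%nat)%C else 0)))%C) K).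
  intros s1 s2.
  destruct (Nat.leb_spec (m * S K) n).
  - rewrite minus_INR by auto. rewrite mult_INR.
    generalize (cpow (/ Cconj w) (S K)) (x (n - m * S K)%nat). intros ca cb. Cfield; repeat split; auto using w_nz, w_nz2; try (destruct K; [lra | pose proof (pos_INR K); lra]).
  - generalize (cpow (/ Cconj w) (S K)). intros ca. Cfield; repeat split; auto using w_nz, w_nz2; try (destruct K; [lra | pose proof (pos_INR K); lra]).
Qed.

Lemma GK_rec K n : GK (S K) n = Cplus (Cmult (Cinv w) (x (n + m)%nat)) (Cmult (Cinv w) (GK K (n + m))).
Proof.
  unfold GK. rewrite sumK_shift. rewrite <- sumK_scal. f_equal.
  simpl. rewrite Nat.mul_1_r. ring.
  apply sumK_ext. intros k _. simpl. replace (n + m * S k)%nat with (n + m + m * k)%nat by lia. ring.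
Qed.

Lemma HK_rec K n : HK (S K) (n + m) = Cplus (Cmult (Cinv (Cconj w)) (x n)) (Cmult (Cinv (Cconj w)) (HK K n)).
Proof.
  unfold HK. rewrite sumK_shift. rewrite <- sumK_scal. f_equal.
  simpl. rewrite Nat.mul_1_r. destruct (Nat.leb_spec m (n + m)); [|lia].
  replace (n + m - m)%nat with n by lia. ring.
  apply sumK_ext. intros k _. simpl cpow.
  destruct (Nat.leb_spec (m * S k) (n + m)); destruct (Nat.leb_spec (m * k) n); try lia.
  replace (n + m - m * S k)%nat with (n - m * k)%nat by lia. ring. ring.
Qed.

Lemma commutator_D : Dm lg m w x ->
  vsub (app Nop (app (Lmw lg m w) x)) (app (Lmw lg m w) (app Nop x)) = vscal (Copp Ci) x.
Proof.
  intros [[Tx NTx] [Nxd TNx]].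
  destruct (w_facts w Hw) as [Ew [Ec1 [Ec2 Hw0]]].
  destruct Tx as [T1 T2]. destruct TNx as [TN1 TN2].
  pose (V1 := vlim (log_psum w (op_pow Lsh m) x)).
  pose (V1N := vlim (log_psum w (op_pow Lsh m) (app Nop x))).
  pose (V2 := vlim (log_psum (Cconj w) (op_pow Rsh m) x)).
  pose (V2N := vlim (log_psum (Cconj w) (op_pow Rsh m) (app Nop x))).
  pose (G := fun n => Cmult (RtoC (- / INR m)) (Cminus (Cmult (RtoC (INR n)) (V1 n)) (V1N n))).
  pose (H := fun n => Cmult (RtoC (/ INR m)) (Cminus (Cmult (RtoC (INR n)) (V2 n)) (V2N n))).
  assert (LG : forall n, Clim (fun K => GK K n) (G n)).
  { intros n. eapply Clim_ext. intros K; symmetry; apply GK_id.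
    apply Clim_scal. apply Clim_minus. apply Clim_scal.
    apply (Log_lim lg w _ x (good_Lm m) T1).
    apply (Log_lim lg w _ _ (good_Lm m) TN1). }
  assert (LH : forall n, Clim (fun K => HK K n) (H n)).
  { intros n. eapply Clim_ext. intros K; symmetry; apply HK_id.
    apply Clim_scal. apply Clim_minus. apply Clim_scal.
    apply (Log_lim lg (Cconj w) _ x (good_Rm m) T2).
    apply (Log_lim lg (Cconj w) _ _ (good_Rm m) TN2). }
  assert (RG : forall n, G n = Cplus (Cmult (Cinv w) (x (n + m)%nat)) (Cmult (Cinv w) (G (n + m)%nat))).
  { intros n.
    assert (A1 : Clim (fun K => GK (S K) n) (G n)) by (apply (Clim_S (fun K => GK K n)); auto).
    assert (A2 : Clim (fun K => GK (S K) n) (Cplus (Cmult (Cinv w) (x (n + m)%nat)) (Cmult (Cinv w) (G (n + m)%nat)))).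
    { apply Clim_ext with (u := fun K => Cplus (Cmult (Cinv w) (x (n + m)%nat)) (Cmult (Cinv w) (GK K (n + m)))).
      intros K. rewrite (GK_rec K n). reflexivity.
      apply Clim_plus. apply Clim_const. apply Clim_scal; auto. }
    exact (Clim_unique _ _ _ A1 A2). }
  assert (RH : forall n, H (n + m)%nat = Cplus (Cmult (Cinv (Cconj w)) (x n)) (Cmult (Cinv (Cconj w)) (H n))).
  { intros n.
    assert (A1 : Clim (fun K => HK (S K) (n + m)) (H (n + m)%nat)) by (apply (Clim_S (fun K => HK K (n + m))); auto).
    assert (A2 : Clim (fun K => HK (S K) (n + m)) (Cplus (Cmult (Cinv (Cconj w)) (x n)) (Cmult (Cinv (Cconj w)) (H n)))).
    { apply Clim_ext with (u := fun K => Cplus (Cmult (Cinv (Cconj w)) (x n)) (Cmult (Cinv (Cconj w)) (HK K n))).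
      intros K. rewrite (HK_rec K n). reflexivity.
      apply Clim_plus. apply Clim_const. apply Clim_scal; auto. }
    exact (Clim_unique _ _ _ A1 A2). }
  set (comm := vsub (app Nop (app (Lmw lg m w) x)) (app (Lmw lg m w) (app Nop x))).
  assert (Ecomm : forall n, comm n = Cmult Ci (Cplus (G n) (H n))).
  { intros n. unfold comm, G, H, V1, V1N, V2, V2N. simpl. unfold vsub, vscal. pose proof INRm_ne.
    generalize (vlim (log_psum w (op_pow Lsh m) x) n) (vlim (log_psum w (op_pow Lsh m) (fun n0 : nat => (INR n0 * x n0)%C)) n)
      (vlim (log_psum (Cconj w) (op_pow Rsh m) x) n) (vlim (log_psum (Cconj w) (op_pow Rsh m) (fun n0 : nat => (INR n0 * x n0)%C)) n).
    intros a b c d. generalize (lg w) (lg (Cconj w)) (x n). intros e f g. Cfield; repeat split; auto using w_nz, w_nz2; try (destruct K; [lra | pose proof (pos_INR K); lra]). }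
  pose (F := fun n => Cplus (x n) (Cplus (G n) (H n))).
  assert (HF : in_l2 F).
  { apply in_l2_ext with (vadd x (vscal (Copp Ci) comm)).
    intros n. unfold vadd, vscal, F. rewrite Ecomm. generalize (x n) (G n) (H n). intros. Cring.
    apply in_l2_add. apply Nxd. apply in_l2_scal. unfold comm. apply in_l2_sub.
    apply NTx. apply T_l2. split; auto. }
  assert (F0 : forall n, F n = RtoC 0).
  { apply (F_zero F w m HF Hw Hm). intros n. unfold F.
    rewrite (RG n), (RH n), Ec2. generalize (x n) (x (n + m)%nat) (G (n + m)%nat) (H n). intros.
    field. exact Hw0. }
  apply functional_extensionality; intros n. fold comm. rewrite Ecomm. unfold vscal.
  specialize (F0 n). unfold F in F0.
  replace (Cplus (G n) (H n)) with (Cminus (RtoC 0) (x n)) by (rewrite <- F0; ring). Cring.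
Qed.
End Comm.

Lemma ip_bound (a b : C) : Cmod (Cmult (Cconj a) b) <= (Cmod a ^ 2 + Cmod b ^ 2) / 2.
Proof.
  rewrite Cmod_mult, Cmod_conj. pose proof (pow2_ge_0 (Cmod a - Cmod b)). nra.
Qed.

Lemma ip_bound_t (a b : C) t : 0 < t ->
  Cmod (Cmult (Cconj a) b) <= t / 2 * Cmod a ^ 2 + / (2 * t) * Cmod b ^ 2.
Proof.
  intros Ht. rewrite Cmod_mult, Cmod_conj.
  pose proof (Cmod_ge_0 a); pose proof (Cmod_ge_0 b).
  assert (E : t / 2 * Cmod a ^ 2 + / (2 * t) * Cmod b ^ 2 - Cmod a * Cmod b =
              / (2 * t) * (t * Cmod a - Cmod b) ^ 2) by (field; lra).
  assert (0 <= / (2 * t) * (t * Cmod a - Cmod b) ^ 2).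
  { apply Rmult_le_pos. apply Rlt_le, Rinv_0_lt_compat; lra. apply pow2_ge_0. }
  lra.
Qed.

Lemma ex_ip a b : in_l2 a -> in_l2 b ->
  ex_series (fun n => Rabs (fst (Cmult (Cconj (a n)) (b n)))) /\
  ex_series (fun n => Rabs (snd (Cmult (Cconj (a n)) (b n)))) /\
  ex_series (fun n => fst (Cmult (Cconj (a n)) (b n))) /\
  ex_series (fun n => snd (Cmult (Cconj (a n)) (b n))).
Proof.
  intros Ha Hb.
  assert (E : ex_series (fun n => (Cmod (a n) ^ 2 + Cmod (b n) ^ 2) / 2)).
  { apply exs_ext with (fun n => / 2 * (Cmod (a n) ^ 2 + Cmod (b n) ^ 2)). intros; field.
    apply (ex_series_scal (V:=R_NormedModule) (/2) (fun n => Cmod (a n) ^ 2 + Cmod (b n) ^ 2)).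
    apply (ex_series_plus (V:=R_NormedModule)); auto. }
  assert (E1 : ex_series (fun n => Rabs (fst (Cmult (Cconj (a n)) (b n))))).
  { apply ex_series_le_R with (2 := E). intros; split. apply Rabs_pos.
    eapply Rle_trans; [apply fst_le_Cmod | apply ip_bound]. }
  assert (E2 : ex_series (fun n => Rabs (snd (Cmult (Cconj (a n)) (b n))))).
  { apply ex_series_le_R with (2 := E). intros; split. apply Rabs_pos.
    eapply Rle_trans; [apply snd_le_Cmod | apply ip_bound]. }
  repeat split; auto; apply ex_series_Rabs; auto.
Qed.

Lemma inner_add_l a a' b : in_l2 a -> in_l2 a' -> in_l2 b ->
  inner (vadd a a') b = Cplus (inner a b) (inner a' b).
Proof.
  intros Ha Ha' Hb. destruct (ex_ip a b Ha Hb) as [_ [_ [A1 A2]]].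
  destruct (ex_ip a' b Ha' Hb) as [_ [_ [B1 B2]]].
  unfold inner, Re, Im. apply injective_projections; simpl.
  - rewrite <- Series_plus by auto. apply Series_ext; intros n; unfold vadd. simpl. ring.
  - rewrite <- Series_plus by auto. apply Series_ext; intros n; unfold vadd. simpl. ring.
Qed.

Lemma inner_add_r a b b' : in_l2 a -> in_l2 b -> in_l2 b' ->
  inner a (vadd b b') = Cplus (inner a b) (inner a b').
Proof.
  intros Ha Hb Hb'. destruct (ex_ip a b Ha Hb) as [_ [_ [A1 A2]]].
  destruct (ex_ip a b' Ha Hb') as [_ [_ [B1 B2]]].
  unfold inner, Re, Im. apply injective_projections; simpl.
  - rewrite <- Series_plus by auto. apply Series_ext; intros n; unfold vadd. simpl. ring.
  - rewrite <- Series_plus by auto. apply Series_ext; intros n; unfold vadd. simpl. ring.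
Qed.

Lemma inner_scal_l c a b : in_l2 a -> in_l2 b ->
  inner (vscal c a) b = Cmult (Cconj c) (inner a b).
Proof.
  intros Ha Hb. destruct (ex_ip a b Ha Hb) as [_ [_ [A1 A2]]].
  destruct c as [c1 c2].
  unfold inner, Re, Im. apply injective_projections; simpl.
  - rewrite <- !Series_scal_l. rewrite <- Series_minus.
    apply Series_ext; intros n; unfold vscal. simpl. ring.
    apply (ex_series_scal (V:=R_NormedModule) c1 (fun n => fst (Cmult (Cconj (a n)) (b n)))); auto.
    apply (ex_series_scal (V:=R_NormedModule) (-c2) (fun n => snd (Cmult (Cconj (a n)) (b n)))); auto.
  - rewrite <- !Series_scal_l. rewrite <- Series_plus.
    apply Series_ext; intros n; unfold vscal. simpl. ring.
    apply (ex_series_scal (V:=R_NormedModule) c1 (fun n => snd (Cmult (Cconj (a n)) (b n)))); auto.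
    apply (ex_series_scal (V:=R_NormedModule) (-c2) (fun n => fst (Cmult (Cconj (a n)) (b n)))); auto.
Qed.

Lemma inner_conj a b : inner b a = Cconj (inner a b).
Proof.
  unfold inner, Re, Im, Cconj. apply injective_projections; simpl.
  - apply Series_ext; intros n; simpl. ring.
  - rewrite <- Series_opp. apply Series_ext; intros n; simpl. ring.
Qed.

Lemma inner_scal_r c a b : in_l2 a -> in_l2 b ->
  inner a (vscal c b) = Cmult c (inner a b).
Proof.
  intros Ha Hb. rewrite inner_conj, inner_scal_l by auto. rewrite (inner_conj b a).
  destruct (inner a b), c. unfold Cconj, Cmult; simpl. apply injective_projections; simpl; ring.
Qed.

Lemma lim_from_bound (d q : nat -> R) B : 0 <= B ->
  (forall K t, 0 < t -> Rabs (d K) <= t * q K + B / t) -> is_lim_seq q 0 -> is_lim_seq d 0.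
Proof.
  intros HB Hb Hq. apply is_lim_seq_spec in Hq. apply is_lim_seq_spec.
  intros eps. set (t := (2 * B + 1) / eps).
  assert (Ht : 0 < t) by (unfold t; apply Rdiv_lt_0_compat; [lra | apply cond_pos]).
  assert (He : 0 < eps / (2 * t)) by (apply Rdiv_lt_0_compat; [apply cond_pos | lra]).
  destruct (Hq (mkposreal _ He)) as [N HN]. exists N. intros K HK.
  specialize (HN K HK). simpl in HN. rewrite Rminus_0_r in *.
  specialize (Hb K t Ht).
  assert (t * q K < eps / 2).
  { apply Rle_lt_trans with (t * Rabs (q K)). apply Rmult_le_compat_l; [lra| apply Rle_abs].
    apply Rlt_le_trans with (t * (eps / (2 * t))). apply Rmult_lt_compat_l; auto.
    right; field; lra. }
  assert (B / t < eps / 2).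
  { unfold t. pose proof (cond_pos eps). replace (B / ((2 * B + 1) / eps)) with (B * eps / (2 * B + 1)) by (field; lra).
    apply Rmult_lt_reg_r with (2 * B + 1). lra. field_simplify; try lra; try nra. }
  lra.
Qed.

Lemma inner_cont_l (s : nat -> vec) y b : (forall K, in_l2 (s K)) -> conv_to s y -> in_l2 b ->
  Clim (fun K => inner (s K) b) (inner y b).
Proof.
  intros Hs [Hy Hl] Hb.
  assert (Hd : forall K, in_l2 (vsub (s K) y)) by (intros; apply in_l2_sub; auto).
  assert (Hq : is_lim_seq (fun K => / 2 * l2norm (vsub (s K) y) ^ 2) 0).
  { replace (Finite 0) with (Finite (/2 * (0 * 0))) by (f_equal; ring).
    apply lim_scal_fin. apply is_lim_seq_ext with (fun K => l2norm (vsub (s K) y) * l2norm (vsub (s K) y)).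
    intros; ring. apply is_lim_seq_mult'; auto. }
  assert (HB : 0 <= / 2 * l2norm b ^ 2) by (apply Rmult_le_pos; [lra| apply pow2_ge_0]).
  assert (Bd : forall K t, 0 < t ->
     Series (fun n => Rabs (Cmod (Cmult (Cconj (vsub (s K) y n)) (b n)))) <=
     t * (/ 2 * l2norm (vsub (s K) y) ^ 2) + / 2 * l2norm b ^ 2 / t).
  { intros K t Ht. rewrite !l2norm_sq by auto.
    replace (t * (/ 2 * Series (fun n => Cmod (vsub (s K) y n) ^ 2)) + / 2 * Series (fun n => Cmod (b n) ^ 2) / t)
      with (Series (fun n => t / 2 * Cmod (vsub (s K) y n) ^ 2 + / (2 * t) * Cmod (b n) ^ 2)).
    apply Series_le. intros n; split. apply Rabs_pos. rewrite Rabs_pos_eq by apply Cmod_ge_0. apply ip_bound_t; auto.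
    apply (ex_series_plus (V:=R_NormedModule)).
    apply (ex_series_scal (V:=R_NormedModule) (t/2) (fun n => Cmod (vsub (s K) y n) ^ 2)); apply Hd.
    apply (ex_series_scal (V:=R_NormedModule) (/(2*t)) (fun n => Cmod (b n) ^ 2)); apply Hb.
    rewrite Series_plus, !Series_scal_l. field. lra.
    apply (ex_series_scal (V:=R_NormedModule) (t/2) (fun n => Cmod (vsub (s K) y n) ^ 2)); apply Hd.
    apply (ex_series_scal (V:=R_NormedModule) (/(2*t)) (fun n => Cmod (b n) ^ 2)); apply Hb. }
  assert (Hm : forall K, ex_series (fun n => Rabs (Cmod (Cmult (Cconj (vsub (s K) y n)) (b n))))).
  { intros K. apply ex_series_le_R with (fun n => (Cmod (vsub (s K) y n) ^ 2 + Cmod (b n) ^ 2) / 2).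
    intros n; split. apply Rabs_pos. rewrite Rabs_pos_eq by apply Cmod_ge_0. apply ip_bound.
    apply exs_ext with (fun n => / 2 * (Cmod (vsub (s K) y n) ^ 2 + Cmod (b n) ^ 2)). intros; field.
    apply (ex_series_scal (V:=R_NormedModule) (/2) (fun n => Cmod (vsub (s K) y n) ^ 2 + Cmod (b n) ^ 2)).
    apply (ex_series_plus (V:=R_NormedModule)); auto. apply Hd. }
  split; apply lim_from_diff.
  - apply (lim_from_bound _ _ _ HB) with (2 := Hq). intros K t Ht.
    destruct (ex_ip (s K) b (Hs K) Hb) as [_ [_ [A1 _]]]. destruct (ex_ip y b Hy Hb) as [_ [_ [B1 _]]].
    unfold inner, Re; simpl fst. rewrite <- Series_minus by auto.
    eapply Rle_trans; [apply Series_Rabs|].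
    apply exs_ext with (fun n => Rabs (fst (Cmult (Cconj (vsub (s K) y n)) (b n)))).
    intros n; f_equal; unfold vsub; simpl; ring.
    apply (ex_ip (vsub (s K) y) b (Hd K) Hb).
    eapply Rle_trans; [|apply (Bd K t Ht)]. apply Series_le.
    intros n; split. apply Rabs_pos. rewrite (Rabs_pos_eq (Cmod _)) by apply Cmod_ge_0.
    apply Rle_trans with (Rabs (fst (Cmult (Cconj (vsub (s K) y n)) (b n)))).
    right; f_equal; unfold vsub; simpl; ring.
    apply fst_le_Cmod. auto.
  - apply (lim_from_bound _ _ _ HB) with (2 := Hq). intros K t Ht.
    destruct (ex_ip (s K) b (Hs K) Hb) as [_ [_ [_ A1]]]. destruct (ex_ip y b Hy Hb) as [_ [_ [_ B1]]].
    unfold inner, Im; simpl snd. rewrite <- Series_minus by auto.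
    eapply Rle_trans; [apply Series_Rabs|].
    apply exs_ext with (fun n => Rabs (snd (Cmult (Cconj (vsub (s K) y n)) (b n)))).
    intros n; f_equal; unfold vsub; simpl; ring.
    apply (ex_ip (vsub (s K) y) b (Hd K) Hb).
    eapply Rle_trans; [|apply (Bd K t Ht)]. apply Series_le.
    intros n; split. apply Rabs_pos. rewrite (Rabs_pos_eq (Cmod _)) by apply Cmod_ge_0.
    apply Rle_trans with (Rabs (snd (Cmult (Cconj (vsub (s K) y n)) (b n)))).
    right; f_equal; unfold vsub; simpl; ring.
    apply snd_le_Cmod. auto.
Qed.

Lemma Clim_conj u a : Clim u a -> Clim (fun K => Cconj (u K)) (Cconj a).
Proof.
  intros [H1 H2]. split; simpl. auto.
  apply is_lim_seq_opp in H2. simpl in H2. exact H2.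
Qed.

Lemma inner_cont_r (s : nat -> vec) y a : (forall K, in_l2 (s K)) -> conv_to s y -> in_l2 a ->
  Clim (fun K => inner a (s K)) (inner a y).
Proof.
  intros Hs Hc Ha.
  assert (CC : forall z : C, Cconj (Cconj z) = z) by (intros [p q]; unfold Cconj; simpl; f_equal; ring).
  apply Clim_ext with (fun K => Cconj (inner (s K) a)).
  intros K; rewrite (inner_conj a (s K)); auto.
  replace (inner a y) with (Cconj (inner y a)) by (rewrite (inner_conj a y); auto).
  apply Clim_conj. apply inner_cont_l; auto.
Qed.

Definition adj (A B : op) : Prop :=
  forall a b, in_l2 a -> in_l2 b -> inner (app A a) b = inner a (app B b).

Lemma Cconj_invol (z : C) : Cconj (Cconj z) = z.
Proof. destruct z as [p q]; unfold Cconj; simpl; f_equal; ring. Qed.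

Lemma adj_LR : adj Lsh Rsh.
Proof.
  intros a b Ha Hb. unfold inner. f_equal.
  - etransitivity; [|symmetry; apply Series_incr_1_aux]. reflexivity.
    simpl. unfold Re; simpl. ring.
  - etransitivity; [|symmetry; apply Series_incr_1_aux]. reflexivity.
    simpl. unfold Im; simpl. ring.
Qed.

Lemma pow_succ_r A k x : app (op_pow A (S k)) x = app (op_pow A k) (app A x).
Proof.
  induction k. reflexivity.
  change (app (op_pow A (S (S k))) x) with (app A (app (op_pow A (S k)) x)).
  rewrite IHk. reflexivity.
Qed.

Lemma adj_pow A B k : good A -> good B -> adj A B -> adj (op_pow A k) (op_pow B k).
Proof.
  intros GA GB H. induction k; intros a b Ha Hb. reflexivity.
  change (app (op_pow A (S k)) a) with (app A (app (op_pow A k) a)).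
  rewrite H. rewrite IHk. rewrite pow_succ_r. reflexivity.
  auto. apply GB; auto. apply (good_pow A k GA); auto. auto.
Qed.

Lemma adj_scal A B c d : good A -> good B -> adj A B -> Cconj c = d -> adj (op_scal c A) (op_scal d B).
Proof.
  intros GA GB H E a b Ha Hb. simpl.
  rewrite inner_scal_l, inner_scal_r, H, E; auto. apply GB; auto. apply GA; auto.
Qed.

Lemma adj_sym A B : good A -> good B -> adj A B -> adj B A.
Proof.
  intros GA GB H a b Ha Hb.
  rewrite (inner_conj b (app B a)). rewrite <- H by auto.
  rewrite (inner_conj a (app A b)). apply Cconj_invol.
Qed.

Lemma inner_zero_l b : in_l2 b -> inner vzero b = RtoC 0.
Proof.
  intros Hb. replace vzero with (vscal (RtoC 0) vzero).
  rewrite inner_scal_l by (auto using in_l2_zero). generalize (inner vzero b); intros z.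
  unfold Cconj; apply injective_projections; simpl; ring.
  apply functional_extensionality; intros; unfold vscal, vzero; ring.
Qed.

Lemma inner_zero_r a : in_l2 a -> inner a vzero = RtoC 0.
Proof.
  intros Ha. rewrite inner_conj, inner_zero_l by auto. unfold Cconj; apply injective_projections; simpl; ring.
Qed.

Lemma conjR (r : R) : Cconj (RtoC r) = RtoC r.
Proof. unfold Cconj, RtoC; simpl; f_equal; ring. Qed.

Lemma adj_psum w1 w2 A B : good A -> good B ->
  adj (op_scal (Cinv w1) A) (op_scal (Cinv w2) B) ->
  forall a b K, in_l2 a -> in_l2 b -> inner (log_psum w1 A a K) b = inner a (log_psum w2 B b K).
Proof.
  intros GA GB H a b K Ha Hb. induction K.
  - change (inner vzero b = inner a vzero). rewrite inner_zero_l, inner_zero_r; auto.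
  - change (log_psum w1 A a (S K)) with (vadd (log_psum w1 A a K)
      (vscal (RtoC (/ INR (S K))) (app (op_pow (op_scal (Cinv w1) A) (S K)) a))).
    change (log_psum w2 B b (S K)) with (vadd (log_psum w2 B b K)
      (vscal (RtoC (/ INR (S K))) (app (op_pow (op_scal (Cinv w2) B) (S K)) b))).
    assert (G1 := good_pow _ (S K) (good_scal (Cinv w1) A GA)).
    assert (G2 := good_pow _ (S K) (good_scal (Cinv w2) B GB)).
    assert (P1 := psum_good w1 A a K GA Ha).
    assert (P2 := psum_good w2 B b K GB Hb).
    assert (Q1 : in_l2 (app (op_pow (op_scal (Cinv w1) A) (S K)) a)) by (apply G1; auto).
    assert (Q2 : in_l2 (app (op_pow (op_scal (Cinv w2) B) (S K)) b)) by (apply G2; auto).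
    rewrite (inner_add_l _ _ _ P1 (in_l2_scal _ _ Q1) Hb).
    rewrite (inner_add_r _ _ _ Ha P2 (in_l2_scal _ _ Q2)).
    rewrite (inner_scal_l _ _ _ Q1 Hb), (inner_scal_r _ _ _ Ha Q2), IHK.
    rewrite (adj_pow _ _ (S K) (good_scal _ _ GA) (good_scal _ _ GB) H a b Ha Hb).
    rewrite conjR. reflexivity.
Qed.

Lemma Log_conv lg w' A x : good A -> dom (Log lg w' A) x ->
  conv_to (log_psum w' A x) (vlim (log_psum w' A x)) /\ in_l2 (vlim (log_psum w' A x)).
Proof.
  intros HA Hx. rewrite Log_dom in Hx by auto. destruct Hx as [Hx [y Cy]].
  assert (Px : forall K, in_l2 (log_psum w' A x K)) by (intros; apply psum_good; auto).
  rewrite (proj1 (conv_vlim _ _ Px Cy)). split; auto. apply Cy.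
Qed.

Lemma adj_Log lg1 lg2 w1 w2 A B x y : good A -> good B ->
  adj (op_scal (Cinv w1) A) (op_scal (Cinv w2) B) ->
  dom (Log lg1 w1 A) x -> dom (Log lg2 w2 B) y ->
  inner (vlim (log_psum w1 A x)) y = inner x (vlim (log_psum w2 B y)).
Proof.
  intros GA GB H Hx Hy.
  assert (Hx2 := Hx); assert (Hy2 := Hy).
  rewrite Log_dom in Hx2, Hy2 by auto.
  destruct (Log_conv lg1 w1 A x GA Hx) as [C1 _]. destruct (Log_conv lg2 w2 B y GB Hy) as [C2 _].
  assert (L1 := inner_cont_l _ _ y (fun K => psum_good w1 A x K GA (proj1 Hx2)) C1 (proj1 Hy2)).
  assert (L2 := inner_cont_r _ _ x (fun K => psum_good w2 B y K GB (proj1 Hy2)) C2 (proj1 Hx2)).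
  apply (Clim_unique _ _ _ L1). eapply Clim_ext; [|exact L2].
  intros K. symmetry. apply adj_psum; auto. apply Hx2. apply Hy2.
Qed.

Lemma log_re0 lg z : is_log lg -> Cmod z = 1 -> fst (lg z) = 0.
Proof.
  intros Hl Hz. assert (Hz0 : z <> RtoC 0) by (intros ->; rewrite Cmod_0 in Hz; lra).
  specialize (Hl z Hz0). rewrite <- Hl in Hz.
  assert (E : forall e t, sqrt ((e * cos t) ^ 2 + (e * sin t) ^ 2) = Rabs e).
  { intros e t. rewrite <- sqrt_Rsqr_abs. f_equal.
    replace ((e * cos t) ^ 2 + (e * sin t) ^ 2) with (e * e * ((sin t)² + (cos t)²)) by (unfold Rsqr; ring).
    rewrite sin2_cos2. unfold Rsqr; ring. }
  unfold Cexp, Cmod in Hz. cbn [fst snd] in Hz. rewrite E in Hz.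
  rewrite Rabs_pos_eq in Hz by (apply Rlt_le, exp_pos).
  unfold Re in Hz. rewrite <- (ln_exp (fst (lg z))), Hz. apply ln_1.
Qed.

Lemma T_herm lg m w x y : is_log lg -> Cmod w = 1 -> (1 <= m)%nat ->
  dom (Lmw lg m w) x -> dom (Lmw lg m w) y ->
  inner (app (Lmw lg m w) x) y = inner x (app (Lmw lg m w) y).
Proof.
  intros Hl Hw Hm [X1 X2] [Y1 Y2].
  destruct (w_facts w Hw) as [Ew [Ec1 [Ec2 Hw0]]].
  assert (Hx : in_l2 x) by (rewrite Log_dom in X1 by apply good_Lm; apply X1).
  assert (Hy : in_l2 y) by (rewrite Log_dom in Y1 by apply good_Lm; apply Y1).
  assert (AD : adj (op_scal (Cinv w) (op_pow Lsh m)) (op_scal (Cinv (Cconj w)) (op_pow Rsh m))).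
  { apply adj_scal; try apply good_Lm; try apply good_Rm.
    apply adj_pow; try apply good_Lsh; try apply good_Rsh. apply adj_LR.
    rewrite Ec1, Ec2. apply Cconj_invol. }
  assert (AD' : adj (op_scal (Cinv (Cconj w)) (op_pow Rsh m)) (op_scal (Cinv w) (op_pow Lsh m))).
  { apply adj_sym; auto; apply good_scal; try apply good_Lm; try apply good_Rm. }
  pose (V1 := fun v => vlim (log_psum w (op_pow Lsh m) v)).
  pose (V2 := fun v => vlim (log_psum (Cconj w) (op_pow Rsh m) v)).
  pose (g := Cdiv Ci (RtoC (INR m))).
  pose (d := Cminus (lg w) (lg (Cconj w))).
  assert (ET : forall v, app (Lmw lg m w) v =
    vadd (vscal (Cmult g d) v) (vadd (vscal (Copp g) (V1 v)) (vscal g (V2 v)))).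
  { intros v. apply functional_extensionality; intros n. simpl. unfold vadd, vsub, vscal, V1, V2, g, d. ring. }
  assert (A1 : inner (V1 x) y = inner x (V2 y)) by (apply (adj_Log lg lg _ _ _ _ x y (good_Lm m) (good_Rm m)); auto).
  assert (A2 : inner (V2 x) y = inner x (V1 y)) by (apply (adj_Log lg lg _ _ _ _ x y (good_Rm m) (good_Lm m)); auto).
  assert (L1x := proj2 (Log_conv _ _ _ _ (good_Lm m) X1)).
  assert (L2x := proj2 (Log_conv _ _ _ _ (good_Rm m) X2)).
  assert (L1y := proj2 (Log_conv _ _ _ _ (good_Lm m) Y1)).
  assert (L2y := proj2 (Log_conv _ _ _ _ (good_Rm m) Y2)).
  fold (V1 x) (V2 x) (V1 y) (V2 y) in L1x, L2x, L1y, L2y.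
  rewrite !ET.
  rewrite inner_add_l, inner_add_l, !inner_scal_l; auto; try (apply in_l2_scal; auto); try (apply in_l2_add; apply in_l2_scal; auto).
  rewrite inner_add_r, inner_add_r, !inner_scal_r; auto; try (apply in_l2_scal; auto); try (apply in_l2_add; apply in_l2_scal; auto).
  rewrite A1, A2.
  assert (R1 := log_re0 lg w Hl Hw).
  assert (R2 := log_re0 lg (Cconj w) Hl ltac:(rewrite Cmod_conj; auto)).
  assert (INR m <> 0) by (apply not_0_INR; lia).
  unfold g, d. generalize (inner x y) (inner x (V2 y)) (inner x (V1 y)). intros p q r.
  destruct (lg w) as [l1 l1']. destruct (lg (Cconj w)) as [l2 l2']. simpl in R1, R2. subst l1 l2.
  apply injective_projections; simpl; field; auto.
Qed.

Lemma conv_dom (s : nat -> vec) y (F : nat -> R) :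
  (forall K, in_l2 (s K)) -> in_l2 y -> (forall k, 0 <= F k) -> ex_series F ->
  (forall K n, Cmod (Cminus (s K n) (y n)) ^ 2 <= F n) ->
  (forall K n, (n < K)%nat -> s K n = y n) -> conv_to s y.
Proof.
  intros Hs Hy HF0 HF Hb Hz. split; auto.
  apply is_lim_seq_spec. intros eps.
  assert (He2 : 0 < eps ^ 2) by (apply pow_lt, cond_pos).
  destruct (series_tail F HF0 HF _ He2) as [K0 HK0]. exists K0. intros K HK.
  rewrite Rminus_0_r, Rabs_pos_eq by apply l2norm_ge0.
  assert (Hd : in_l2 (vsub (s K) y)) by (apply in_l2_sub; auto).
  assert (Hle : Series (fun n => Cmod (vsub (s K) y n) ^ 2) <= Series (fun k => F (K + k)%nat)).
  { rewrite (Series_incr_n_aux _ K).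
    apply Series_le. intros n; split. apply Cmod_sq_ge0. apply Hb.
    apply (ex_series_incr_n F K); auto.
    intros k Hk. unfold vsub. rewrite Hz by auto.
    replace (Cminus (y k) (y k)) with (RtoC 0) by ring. rewrite Cmod_0. ring. }
  specialize (HK0 K HK).
  unfold l2norm. rewrite <- (sqrt_pow2 eps) by (apply Rlt_le, cond_pos).
  apply sqrt_lt_1_alt. split. apply series_ge0; auto. intros; apply Cmod_sq_ge0. lra.
Qed.

Definition xi (j : nat) : vec := fun n => if (n =? j)%nat then RtoC 1 else RtoC 0.

Lemma xi_fin j : forall n, (S j <= n)%nat -> xi j n = RtoC 0.
Proof. intros n Hn. unfold xi. destruct (Nat.eqb_spec n j); auto. lia. Qed.

Lemma xi_l2 j : in_l2 (xi j).
Proof. apply (in_l2_fin _ (S j)). apply xi_fin. Qed.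

Section Basis.
Variables (lg : C -> C) (m : nat) (w : C).
Hypothesis Hl : is_log lg.
Hypothesis Hw : Cmod w = 1.
Hypothesis Hm : (1 <= m)%nat.

Definition prog (j n : nat) : option nat :=
  if andb (j <=? n)%nat ((n - j) mod m =? 0)%nat then Some ((n - j) / m)%nat else None.

Lemma prog_some j n p : prog j n = Some p <-> n = (j + m * p)%nat.
Proof.
  unfold prog. split.
  - destruct (Nat.leb_spec j n); destruct (Nat.eqb_spec ((n - j) mod m) 0); simpl; intros E; try discriminate.
    injection E; intros <-. pose proof (Nat.div_mod (n - j) m ltac:(lia)). lia.
  - intros ->. replace (j + m * p - j)%nat with (p * m)%nat by lia.
    rewrite Nat.Div0.mod_mul, Nat.div_mul by lia.
    destruct (Nat.leb_spec j (j + m * p)); [|lia]. reflexivity.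
Qed.

Lemma prog_none j n : prog j n = None -> forall p, n <> (j + m * p)%nat.
Proof. intros H p E. apply prog_some in E. congruence. Qed.

Lemma prog_shift j n : prog (j + m) n = match prog j n with Some (S p) => Some p | _ => None end.
Proof.
  destruct (prog j n) as [[|p]|] eqn:E.
  - apply prog_some in E. destruct (prog (j + m) n) eqn:E2; auto. apply prog_some in E2. lia.
  - apply prog_some in E. apply prog_some. lia.
  - destruct (prog (j + m) n) eqn:E2; auto. apply prog_some in E2.
    exfalso. apply (prog_none j n E (S n0)). lia.
Qed.

Definition Ylim (j : nat) : vec := fun n =>
  match prog j n with Some (S q) => Cmult (RtoC (/ INR (S q))) (cpow w (S q)) | _ => RtoC 0 end.

Lemma psum_xi j K n :
  log_psum (Cconj w) (op_pow Rsh m) (xi j) K n =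
  match prog j n with Some (S q) =>
     if (S q <=? K)%nat then Cmult (RtoC (/ INR (S q))) (cpow w (S q)) else RtoC 0
  | _ => RtoC 0 end.
Proof.
  destruct (w_facts w Hw) as [_ [_ [Ec2 _]]].
  rewrite psumR_coord by auto. rewrite Ec2.
  induction K.
  - simpl. destruct (prog j n) as [[|q]|]; auto.
  - rewrite sumK_S, IHK.
    destruct (prog j n) as [[|q]|] eqn:E.
    + apply prog_some in E. destruct (Nat.leb_spec (m * S K) n); [|ring].
      unfold xi. destruct (Nat.eqb_spec (n - m * S K) j). lia. ring.
    + apply prog_some in E. destruct (Nat.leb_spec (m * S K) n).
      * unfold xi. destruct (Nat.eqb_spec (n - m * S K) j).
        -- assert (q = K) by nia. subst q.
           rewrite Nat.leb_refl. destruct (Nat.leb_spec (S K) K); [lia|]. ring.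
        -- destruct (Nat.leb_spec (S q) K); destruct (Nat.leb_spec (S q) (S K)); try ring; try lia.
           assert (q = K) by lia. subst. lia.
      * destruct (Nat.leb_spec (S q) K); destruct (Nat.leb_spec (S q) (S K)); try ring; try nia.
    + destruct (Nat.leb_spec (m * S K) n); [|ring].
      unfold xi. destruct (Nat.eqb_spec (n - m * S K) j); [|ring].
      exfalso. apply (prog_none j n E (S K)). lia.
Qed.

Definition Fj (j : nat) : nat -> R := fun n => INR (j + m + 1) ^ 2 * / (INR n + 1) ^ 2.

Lemma Fj_pos j n : 0 <= Fj j n.
Proof.
  unfold Fj. apply Rmult_le_pos. apply pow2_ge_0.
  apply Rlt_le, Rinv_0_lt_compat, pow_lt. pose proof (pos_INR n); lra.
Qed.

Lemma Fj_ex j : ex_series (Fj j).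
Proof.
  unfold Fj. apply (ex_series_scal (V:=R_NormedModule) (INR (j + m + 1) ^ 2) (fun n => / (INR n + 1) ^ 2)).
  apply ex_series_inv_sq.
Qed.

Lemma coef_bound j n q : prog j n = Some (S q) ->
  Cmod (Cmult (RtoC (/ INR (S q))) (cpow w (S q))) ^ 2 <= Fj j n.
Proof.
  intros E. apply prog_some in E.
  rewrite Cmod_mult, cpow_mod by auto. rewrite Cmod_R, Rmult_1_r.
  assert (HS : 0 < INR (S q)) by (apply lt_0_INR; lia).
  rewrite Rabs_pos_eq by (apply Rlt_le, Rinv_0_lt_compat; auto).
  unfold Fj. assert (Hn : INR n + 1 <= INR (j + m + 1) * INR (S q)).
  { rewrite <- S_INR, <- mult_INR. apply le_INR. nia. }
  assert (0 < INR n + 1) by (pose proof (pos_INR n); lra).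
  rewrite <- !Rinv_pow by lra.
  replace (/ INR (S q) ^ 2) with (1 * / INR (S q) ^ 2) by ring.
  rewrite <- Rdiv_def. rewrite <- Rdiv_def.
  apply Rle_div_l. apply pow_lt; auto.
  unfold Rdiv. rewrite Rmult_assoc. rewrite (Rmult_comm _ (INR (S q) ^ 2)).
  apply Rle_trans with (INR (j + m + 1) ^ 2 * INR (S q) ^ 2 * / (INR (j + m + 1) * INR (S q)) ^ 2).
  rewrite Rpow_mult_distr. right. field. split; lra || (apply Rgt_not_eq; apply lt_0_INR; lia).
  rewrite Rmult_assoc. apply Rmult_le_compat_l. apply pow2_ge_0.
  apply Rmult_le_compat_l. apply pow2_ge_0.
  apply Rinv_le_contravar. apply pow_lt; lra. apply pow_incr. lra.
Qed.

Lemma Ylim_l2 j : in_l2 (Ylim j).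
Proof.
  unfold in_l2. apply ex_series_le_R with (Fj j). 2: apply Fj_ex.
  intros n; split. apply Cmod_sq_ge0. unfold Ylim. destruct (prog j n) as [[|q]|] eqn:E.
  rewrite Cmod_0; simpl; rewrite Rmult_0_l; apply Fj_pos.
  apply coef_bound; auto.
  rewrite Cmod_0; simpl; rewrite Rmult_0_l; apply Fj_pos.
Qed.

Lemma conv_xi j : conv_to (log_psum (Cconj w) (op_pow Rsh m) (xi j)) (Ylim j).
Proof.
  apply conv_dom with (Fj j).
  - intros; apply psum_good. apply good_Rm. apply xi_l2.
  - apply Ylim_l2.
  - apply Fj_pos.
  - apply Fj_ex.
  - intros K n. rewrite psum_xi. unfold Ylim. destruct (prog j n) as [[|q]|] eqn:E.
    1,3: replace (Cminus (RtoC 0) (RtoC 0)) with (RtoC 0) by ring; rewrite Cmod_0; simpl; rewrite Rmult_0_l; apply Fj_pos.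
    destruct (Nat.leb_spec (S q) K).
    replace (Cminus _ _) with (RtoC 0) by ring; rewrite Cmod_0; simpl; rewrite Rmult_0_l; apply Fj_pos.
    eapply Rle_trans; [|apply (coef_bound j n q E)]. right. f_equal.
    rewrite <- Cmod_opp. f_equal. ring.
  - intros K n Hn. rewrite psum_xi. unfold Ylim. destruct (prog j n) as [[|q]|] eqn:E; auto.
    apply prog_some in E. destruct (Nat.leb_spec (S q) K); auto. nia.
Qed.

Lemma Log2_xi j : dom (Log lg (Cconj w) (op_pow Rsh m)) (xi j) /\
  vlim (log_psum (Cconj w) (op_pow Rsh m) (xi j)) = Ylim j.
Proof.
  split.
  - apply Log_dom. apply good_Rm. split. apply xi_l2. exists (Ylim j). apply conv_xi.
  - apply conv_vlim. intros; apply psum_good. apply good_Rm. apply xi_l2. apply conv_xi.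
Qed.


Lemma sumK_zero f K : (forall k, (1 <= k <= K)%nat -> f k = RtoC 0) -> sumK f K = RtoC 0.
Proof.
  intros H. induction K. reflexivity. rewrite sumK_S, (H (S K)) by lia. rewrite IHK. ring. intros; apply H; lia.
Qed.

Definition supp (y : vec) (P : nat) : Prop := forall n, (P <= n)%nat -> y n = RtoC 0.

Lemma supp_l2 y P : supp y P -> in_l2 y.
Proof. intros H. apply (in_l2_fin y P); auto. Qed.

Lemma Log1_fin y P : supp y P ->
  dom (Log lg w (op_pow Lsh m)) y /\
  vlim (log_psum w (op_pow Lsh m) y) = log_psum w (op_pow Lsh m) y P /\
  supp (log_psum w (op_pow Lsh m) y P) P.
Proof.
  intros Hy. assert (Hl2 : in_l2 y) by (apply (in_l2_fin y P); auto).
  assert (E : forall d, log_psum w (op_pow Lsh m) y (P + d) = log_psum w (op_pow Lsh m) y P).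
  { intros d. apply functional_extensionality; intros n. rewrite !psumL_coord.
    induction d. rewrite Nat.add_0_r; auto.
    rewrite Nat.add_succ_r, sumK_S, IHd. rewrite Hy by nia. ring. }
  assert (C : conv_to (log_psum w (op_pow Lsh m) y) (log_psum w (op_pow Lsh m) y P)).
  { apply conv_ev with P. apply psum_good; auto. apply good_Lm.
    intros K HK. replace K with (P + (K - P))%nat by lia. apply E. }
  split; [|split].
  - apply Log_dom. apply good_Lm. split; auto. exists (log_psum w (op_pow Lsh m) y P); auto.
  - apply conv_vlim; auto. intros; apply psum_good; auto. apply good_Lm.
  - intros n Hn. rewrite psumL_coord. apply sumK_zero. intros k Hk. rewrite Hy by nia. ring.
Qed.

Definition dvec (j : nat) : vec := vsub (xi j) (vscal w (xi (j + m))).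

Lemma dvec_eq j : dvec j = vadd (xi j) (vscal (Copp w) (xi (j + m))).
Proof. apply functional_extensionality; intros n; unfold dvec, vsub, vadd, vscal. ring. Qed.

Lemma xi_N j n : Cmult (RtoC (INR n)) (xi j n) = Cmult (RtoC (INR j)) (xi j n).
Proof. unfold xi. destruct (Nat.eqb_spec n j). subst; auto. ring. Qed.

Lemma Ndvec_eq j : app Nop (dvec j) =
  vadd (vscal (RtoC (INR j)) (xi j)) (vscal (Copp (Cmult w (RtoC (INR (j + m))))) (xi (j + m))).
Proof.
  apply functional_extensionality; intros n; simpl; unfold dvec, vsub, vadd, vscal.
  replace (Cmult (RtoC (INR n)) (Cminus (xi j n) (Cmult w (xi (j + m)%nat n))))
    with (Cminus (Cmult (RtoC (INR n)) (xi j n)) (Cmult w (Cmult (RtoC (INR n)) (xi (j + m)%nat n)))) by ring.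
  rewrite !xi_N. ring.
Qed.

Lemma supp_comb j a b : supp (vadd (vscal a (xi j)) (vscal b (xi (j + m)))) (S (j + m)).
Proof.
  intros n Hn. unfold vadd, vscal. rewrite !xi_fin by lia. ring.
Qed.

Lemma Log2_comb j a b :
  dom (Log lg (Cconj w) (op_pow Rsh m)) (vadd (vscal a (xi j)) (vscal b (xi (j + m)))) /\
  vlim (log_psum (Cconj w) (op_pow Rsh m) (vadd (vscal a (xi j)) (vscal b (xi (j + m)))))
   = vadd (vscal a (Ylim j)) (vscal b (Ylim (j + m))).
Proof.
  destruct (psum_lin (Cconj w) (op_pow Rsh m) (lin_Rm m)) as [La Ls].
  assert (P1 : forall K, in_l2 (log_psum (Cconj w) (op_pow Rsh m) (xi j) K)).
  { intros; apply psum_good. apply good_Rm. apply xi_l2. }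
  assert (P2 : forall K, in_l2 (log_psum (Cconj w) (op_pow Rsh m) (xi (j + m)) K)).
  { intros; apply psum_good. apply good_Rm. apply xi_l2. }
  assert (C : conv_to (log_psum (Cconj w) (op_pow Rsh m) (vadd (vscal a (xi j)) (vscal b (xi (j + m)))))
      (vadd (vscal a (Ylim j)) (vscal b (Ylim (j + m))))).
  { replace (log_psum (Cconj w) (op_pow Rsh m) (vadd (vscal a (xi j)) (vscal b (xi (j + m)))))
      with (fun K => vadd (vscal a (log_psum (Cconj w) (op_pow Rsh m) (xi j) K))
                          (vscal b (log_psum (Cconj w) (op_pow Rsh m) (xi (j + m)) K))).
    apply conv_add. intros; apply in_l2_scal; auto. intros; apply in_l2_scal; auto.
    apply conv_scal; auto. apply conv_xi. apply conv_scal; auto. apply conv_xi.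
    apply functional_extensionality; intros K. rewrite La, !Ls. reflexivity. }
  assert (Hv : in_l2 (vadd (vscal a (xi j)) (vscal b (xi (j + m))))).
  { apply in_l2_add; apply in_l2_scal; apply xi_l2. }
  split.
  - apply Log_dom. apply good_Rm. split; auto. eexists; eauto.
  - apply conv_vlim; auto. intros; apply psum_good; auto. apply good_Rm.
Qed.

Definition Zj (j : nat) : vec := vadd (Ylim j) (vscal (Copp w) (Ylim (j + m))).

Lemma real_bound_SS (a J Q : R) : 0 <= a -> 0 <= Q -> 1 <= J -> a + 1 <= J * (Q + 2) ->
  (a * / ((Q + 1) * (Q + 2))) ^ 2 <= 4 * J ^ 4 * / (a + 1) ^ 2.
Proof.
  intros Ha HQ HJ Hb.
  assert (H1 : 0 < (Q + 1) * (Q + 2)) by nra.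
  assert (H2 : 0 < (a + 1) ^ 2) by nra.
  assert (E : (a * / ((Q + 1) * (Q + 2))) ^ 2 = a ^ 2 / ((Q + 1) * (Q + 2)) ^ 2) by (field; lra).
  rewrite E. apply Rmult_le_reg_r with (((Q + 1) * (Q + 2)) ^ 2 * (a + 1) ^ 2).
  apply Rmult_lt_0_compat; nra.
  replace (a ^ 2 / ((Q + 1) * (Q + 2)) ^ 2 * (((Q + 1) * (Q + 2)) ^ 2 * (a + 1) ^ 2)) with (a ^ 2 * (a + 1) ^ 2) by (field; lra).
  replace (4 * J ^ 4 * / (a + 1) ^ 2 * (((Q + 1) * (Q + 2)) ^ 2 * (a + 1) ^ 2))
    with (4 * J ^ 4 * ((Q + 1) * (Q + 2)) ^ 2) by (field; lra).
  assert (A1 : a ^ 2 <= (J * (Q + 2)) ^ 2) by nra.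
  assert (A2 : (a + 1) ^ 2 <= (J * (Q + 2)) ^ 2) by nra.
  assert (A3 : a ^ 2 * (a + 1) ^ 2 <= (J * (Q + 2)) ^ 2 * (J * (Q + 2)) ^ 2).
  { apply Rmult_le_compat; nra. }
  assert (A4 : (Q + 2) ^ 2 <= 4 * (Q + 1) ^ 2) by nra.
  assert (A5 : (J * (Q + 2)) ^ 2 * (J * (Q + 2)) ^ 2 = J ^ 4 * (Q + 2) ^ 2 * (Q + 2) ^ 2) by ring.
  assert (A6 : J ^ 4 * (Q + 2) ^ 2 * (Q + 2) ^ 2 <= J ^ 4 * (4 * (Q + 1) ^ 2) * (Q + 2) ^ 2).
  { apply Rmult_le_compat_r. nra. apply Rmult_le_compat_l. nra. auto. }
  nra.
Qed.

Lemma Zj_bound j n : Cmod (Cmult (RtoC (INR n)) (Zj j n)) ^ 2 <= 4 * Fj j n * INR (j + m + 1) ^ 2.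
Proof.
  assert (HJ : 1 <= INR (j + m + 1)) by (rewrite plus_INR; simpl; pose proof (pos_INR (j + m)); lra).
  assert (Hn0 : 0 < INR n + 1) by (pose proof (pos_INR n); lra).
  assert (R0 : 0 <= 4 * Fj j n * INR (j + m + 1) ^ 2).
  { apply Rmult_le_pos. pose proof (Fj_pos j n); lra. apply pow2_ge_0. }
  unfold Zj, Ylim, vadd, vscal. rewrite prog_shift.
  destruct (prog j n) as [[|[|q]]|] eqn:E.
  - replace (Cmult (RtoC (INR n)) (Cplus (RtoC 0) (Cmult (Copp w) (RtoC 0)))) with (RtoC 0) by ring.
    rewrite Cmod_0. simpl. lra.
  - apply prog_some in E. rewrite Nat.mul_1_r in E. subst n.
    replace (Cmult (RtoC (INR (j + m))) (Cplus (Cmult (RtoC (/ INR 1)) (cpow w 1)) (Cmult (Copp w) (RtoC 0))))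
      with (Cmult (RtoC (INR (j + m))) w) by (simpl; Cfield).
    rewrite Cmod_mult, Hw, Cmod_R, Rabs_pos_eq by apply pos_INR. unfold Fj.
    rewrite plus_INR. simpl INR at 2. rewrite plus_INR. simpl.
    pose proof (pos_INR (j + m)). rewrite !plus_INR in *.
    set (a := INR j + INR m) in *. field_simplify; try lra.
    apply Rmult_le_reg_r with ((a+1)^2). nra. field_simplify; try lra. nra.
  - apply prog_some in E.
    assert (Eq : Cmult (RtoC (INR n)) (Cplus (Cmult (RtoC (/ INR (S (S q)))) (cpow w (S (S q))))
                   (Cmult (Copp w) (Cmult (RtoC (/ INR (S q))) (cpow w (S q)))))
               = Cmult (RtoC (- (INR n * / ((INR q + 1) * (INR q + 2))))) (cpow w (S (S q)))).
    { change (cpow w (S (S q))) with (Cmult w (cpow w (S q))).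
      rewrite !S_INR. generalize (cpow w (S q)). intros c. pose proof (pos_INR q).
      apply injective_projections; simpl; field; lra. }
    rewrite Eq, Cmod_mult, cpow_mod, Cmod_R, Rmult_1_r by auto.
    rewrite Rabs_Ropp, Rabs_pos_eq.
    2:{ apply Rmult_le_pos. apply pos_INR. apply Rlt_le, Rinv_0_lt_compat. pose proof (pos_INR q); nra. }
    unfold Fj. replace (4 * (INR (j + m + 1) ^ 2 * / (INR n + 1) ^ 2) * INR (j + m + 1) ^ 2)
      with (4 * INR (j + m + 1) ^ 4 * / (INR n + 1) ^ 2) by ring.
    apply real_bound_SS; auto. apply pos_INR. apply pos_INR.
    rewrite <- S_INR. replace (INR q + 2) with (INR (S (S q))) by (rewrite !S_INR; ring).
    rewrite <- mult_INR. apply le_INR. nia.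
  - replace (Cmult (RtoC (INR n)) (Cplus (RtoC 0) (Cmult (Copp w) (RtoC 0)))) with (RtoC 0) by ring.
    rewrite Cmod_0. simpl. lra.
Qed.

Lemma NZj_l2 j : in_l2 (fun n => Cmult (RtoC (INR n)) (Zj j n)).
Proof.
  unfold in_l2. apply ex_series_le_R with (fun n => 4 * Fj j n * INR (j + m + 1) ^ 2).
  intros n; split. apply Cmod_sq_ge0. apply Zj_bound.
  apply exs_ext with (fun n => (4 * INR (j + m + 1) ^ 2) * Fj j n). intros; ring.
  apply (ex_series_scal (V:=R_NormedModule) (4 * INR (j + m + 1) ^ 2) (Fj j)). apply Fj_ex.
Qed.


Lemma dvec_eq2 j : dvec j = vadd (vscal (RtoC 1) (xi j)) (vscal (Copp w) (xi (j + m))).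
Proof. apply functional_extensionality; intros n; unfold dvec, vsub, vadd, vscal. ring. Qed.

Lemma dvec_D j : Dm lg m w (dvec j).
Proof.
  assert (Sd : supp (dvec j) (S (j + m))) by (rewrite dvec_eq2; apply supp_comb).
  assert (SNd : supp (app Nop (dvec j)) (S (j + m))) by (rewrite Ndvec_eq; apply supp_comb).
  destruct (Log1_fin _ _ Sd) as [L1d [V1d S1d]].
  destruct (Log1_fin _ _ SNd) as [L1Nd _].
  destruct (Log2_comb j (RtoC 1) (Copp w)) as [L2d V2d]. rewrite <- dvec_eq2 in L2d, V2d.
  destruct (Log2_comb j (RtoC (INR j)) (Copp (Cmult w (RtoC (INR (j + m)))))) as [L2Nd _].
  rewrite <- Ndvec_eq in L2Nd.
  assert (Td : dom (Lmw lg m w) (dvec j)) by (split; auto).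
  split; split; auto.
  - split. apply T_l2; auto.
    pose (g := Cdiv Ci (RtoC (INR m))).
    pose (P := log_psum w (op_pow Lsh m) (dvec j) (S (j + m))).
    pose (A := fun n => Cmult (RtoC (INR n)) (Cmult g (Cminus (Cminus (Cmult (lg w) (dvec j n)) (P n))
                                                              (Cmult (lg (Cconj w)) (dvec j n))))).
    assert (HA : supp A (S (j + m))).
    { intros n Hn. unfold A. rewrite Sd by auto. unfold P. rewrite S1d by auto. ring. }
    apply in_l2_ext with (vadd A (vscal g (fun n => Cmult (RtoC (INR n)) (Zj j n)))).
    + intros n. unfold A, vadd, vscal. simpl app. unfold vscal, vsub.
      change (vlim (log_psum w (op_pow Lsh m) (dvec j)) n) with (vlim (log_psum w (op_pow Lsh m) (dvec j)) n).
      rewrite V1d, V2d. fold P. unfold Zj, vadd, vscal, g. ring.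
    + apply in_l2_add. apply (supp_l2 _ _ HA). apply in_l2_scal. apply NZj_l2.
  - split. apply (supp_l2 _ _ Sd). apply (supp_l2 _ _ SNd).
  - split; auto.
Qed.


Fixpoint csum (g : nat -> C) (K : nat) : C :=
  match K with O => RtoC 0 | S K => Cplus (csum g K) (g K) end.
Fixpoint rsum (g : nat -> R) (K : nat) : R :=
  match K with O => 0 | S K => rsum g K + g K end.
Definition vsum (f : nat -> vec) (K : nat) : vec := fun n => csum (fun k => f k n) K.

Lemma csum_S f K : csum f (S K) = Cplus (csum f K) (f K).
Proof. reflexivity. Qed.

Lemma csum_ext f g K : (forall k, (k < K)%nat -> f k = g k) -> csum f K = csum g K.
Proof. induction K; simpl; intros H; auto. rewrite IHK, H; auto. Qed.
Lemma csum_plus f g K : csum (fun k => Cplus (f k) (g k)) K = Cplus (csum f K) (csum g K).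
Proof. induction K; simpl. ring. rewrite IHK; ring. Qed.
Lemma csum_scal c f K : csum (fun k => Cmult c (f k)) K = Cmult c (csum f K).
Proof. induction K; simpl. ring. rewrite IHK; ring. Qed.
Lemma csum_const c K : csum (fun _ => c) K = Cmult (RtoC (INR K)) c.
Proof. induction K; simpl csum. simpl; ring. rewrite IHK, S_INR. Cring. Qed.
Lemma csum_mod f K : Cmod (csum f K) <= rsum (fun k => Cmod (f k)) K.
Proof.
  induction K; simpl. rewrite Cmod_0; lra.
  eapply Rle_trans. apply Cmod_triangle. lra.
Qed.
Lemma rsum_le f g K : (forall k, f k <= g k) -> rsum f K <= rsum g K.
Proof. intros H; induction K; simpl. lra. pose proof (H K); lra. Qed.
Lemma rsum_ge0 f K : (forall k, 0 <= f k) -> 0 <= rsum f K.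
Proof. intros H; induction K; simpl. lra. pose proof (H K); lra. Qed.
Lemma rsum_scal c f K : rsum (fun k => c * f k) K = c * rsum f K.
Proof. induction K; simpl. ring. rewrite IHK; ring. Qed.

Lemma D_zero : Dm lg m w vzero.
Proof.
  replace vzero with (vscal (RtoC 0) (dvec 0)). apply D_scal. apply dvec_D.
  apply functional_extensionality; intros; unfold vscal, vzero; ring.
Qed.

Lemma D_vsum f K : (forall k, (k < K)%nat -> Dm lg m w (f k)) -> Dm lg m w (vsum f K).
Proof.
  intros H. induction K.
  - replace (vsum f 0) with vzero by reflexivity. apply D_zero.
  - replace (vsum f (S K)) with (vadd (vsum f K) (f K)) by reflexivity.
    apply D_add. apply IHK; intros; apply H; lia. apply H; lia.
Qed.

Definition tel j i : vec := vsum (fun l => vscal (cpow w l) (dvec (j + l * m))) i.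

Lemma tel_eq j i : tel j i = vsub (xi j) (vscal (cpow w i) (xi (j + m * i))).
Proof.
  induction i.
  - apply functional_extensionality; intros n. unfold tel, vsum, vsub, vscal. simpl.
    rewrite Nat.mul_0_r, Nat.add_0_r. ring.
  - apply functional_extensionality; intros n.
    change (tel j (S i) n) with (Cplus (tel j i n) (vscal (cpow w i) (dvec (j + i * m)) n)).
    rewrite IHi. unfold vsub, vscal, dvec. simpl cpow.
    replace (j + i * m + m)%nat with (j + m * S i)%nat by lia.
    replace (j + i * m)%nat with (j + m * i)%nat by lia. unfold vsub, vscal. ring.
Qed.

Lemma tel_D j i : Dm lg m w (tel j i).
Proof. apply D_vsum. intros k _. apply D_scal, dvec_D. Qed.

Definition Eapp (M j : nat) : vec := vscal (RtoC (/ INR M)) (vsum (fun i => tel j (S i)) M).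

Lemma csum_prog j M n :
  csum (fun i => Cmult (cpow w (S i)) (xi (j + m * S i) n)) M =
  match prog j n with Some (S i) => if (i <? M)%nat then cpow w (S i) else RtoC 0 | _ => RtoC 0 end.
Proof.
  induction M.
  - simpl. destruct (prog j n) as [[|q]|]; auto.
  - rewrite csum_S, IHM. unfold xi.
    destruct (prog j n) as [[|q]|] eqn:E.
    + apply prog_some in E. destruct (Nat.eqb_spec n (j + m * S M)). lia. ring.
    + apply prog_some in E. destruct (Nat.eqb_spec n (j + m * S M)).
      * assert (q = M) by nia. subst q. destruct (Nat.ltb_spec M M); destruct (Nat.ltb_spec M (S M)); try lia. ring.
      * destruct (Nat.ltb_spec q M); destruct (Nat.ltb_spec q (S M)); try lia; try ring.
        assert (q = M) by lia. subst; lia.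
    + destruct (Nat.eqb_spec n (j + m * S M)); [|ring].
      exfalso. apply (prog_none j n E (S M)). lia.
Qed.

Lemma xi_minus_E M j n : (1 <= M)%nat ->
  Cminus (xi j n) (Eapp M j n) =
  Cmult (RtoC (/ INR M)) (csum (fun i => Cmult (cpow w (S i)) (xi (j + m * S i) n)) M).
Proof.
  intros HM. unfold Eapp, vscal, vsum.
  rewrite (csum_ext _ (fun i => Cplus (xi j n) (Cmult (RtoC (-1)) (Cmult (cpow w (S i)) (xi (j + m * S i) n))))).
  rewrite csum_plus, csum_const, csum_scal.
  assert (INR M <> 0) by (apply not_0_INR; lia).
  generalize (csum (fun i => Cmult (cpow w (S i)) (xi (j + m * S i) n)) M) (xi j n). intros a b.
  apply injective_projections; simpl; field; auto.
  intros k _. rewrite tel_eq. unfold vsub, vscal. ring.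
Qed.

Lemma series_fin_bound (a : nat -> R) P c : (forall n, 0 <= a n <= c) ->
  (forall n, (P <= n)%nat -> a n = 0) -> Series a <= INR P * c.
Proof.
  intros Hb Hz.
  assert (S0 : Series (fun _ : nat => 0) = 0).
  { rewrite (Series_ext _ (fun n => 0 * 0)) by (intros; ring). rewrite Series_scal_l. ring. }
  assert (Ex : ex_series a).
  { apply (ex_series_incr_n a P). apply exs_ext with (fun _ => 0). intros; rewrite Hz by lia; auto.
    apply ex_series_zero. }
  destruct P.
  - rewrite (Series_ext _ (fun _ => 0)) by (intros; apply Hz; lia). rewrite S0. simpl; lra.
  - rewrite (Series_incr_n a (S P)) by (lia || auto). simpl pred.
    rewrite (Series_ext _ (fun _ => 0)) by (intros; apply Hz; lia). rewrite S0.
    rewrite Rplus_0_r.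
    eapply Rle_trans. apply (sum_Rle _ (fun _ => c)). intros; apply Hb.
    rewrite sum_cte. lra.
Qed.

Lemma l2_small_sq (v : vec) d : 0 < d -> in_l2 v -> Series (fun n => Cmod (v n) ^ 2) < d ^ 2 -> l2norm v < d.
Proof.
  intros Hd Hv Hs. rewrite <- l2norm_sq in Hs by auto. pose proof (l2norm_ge0 v).
  apply Rnot_le_lt. intros Hc. assert (d ^ 2 <= l2norm v ^ 2) by (apply pow_incr; lra). lra.
Qed.

Lemma density : dense (Dm lg m w).
Proof.
  intros x Hx eps Heps.
  set (d := eps / (2 * sqrt 2)).
  assert (Hs2 : 0 < sqrt 2) by (apply sqrt_lt_R0; lra).
  assert (Hd : 0 < d) by (unfold d; apply Rdiv_lt_0_compat; lra).
  assert (Hd2 : 0 < d ^ 2) by (apply pow_lt; auto).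
  destruct (series_tail (fun n => Cmod (x n) ^ 2) (fun _ => Cmod_sq_ge0 _) Hx _ Hd2) as [N HN].
  specialize (HN N (Nat.le_refl N)).
  set (B := rsum (fun j => Cmod (x j)) N).
  assert (HB : 0 <= B) by (apply rsum_ge0; intros; apply Cmod_ge_0).
  destruct (INR_unbounded ((INR N + INR m) * B ^ 2 / d ^ 2)) as [M0 HM0].
  set (M := S M0).
  assert (HM : (1 <= M)%nat) by (unfold M; lia).
  assert (HMr : 0 < INR M) by (apply lt_0_INR; lia).
  assert (HMbig : (INR N + INR m) * B ^ 2 / d ^ 2 < INR M) by (unfold M; rewrite S_INR; lra).
  set (z := vsum (fun j => vscal (x j) (Eapp M j)) N).
  exists z. split.
  { apply D_vsum. intros k _. apply D_scal. unfold Eapp. apply D_scal. apply D_vsum. intros; apply tel_D. }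
  set (a := fun n => if (n <? N)%nat then RtoC 0 else x n).
  set (q := fun n => csum (fun j => Cmult (x j) (Cmult (RtoC (/ INR M))
                 (csum (fun i => Cmult (cpow w (S i)) (xi (j + m * S i) n)) M))) N).
  assert (Exz : vsub x z = vadd a q).
  { apply functional_extensionality; intros n. unfold vsub, vadd, a, q, z, vsum, vscal.
    assert (XN : csum (fun j => Cmult (x j) (xi j n)) N = if (n <? N)%nat then x n else RtoC 0).
    { clear. induction N. simpl. destruct (Nat.ltb_spec n 0); [lia|auto].
      simpl csum. rewrite IHN. unfold xi. destruct (Nat.eqb_spec n N).
      subst. destruct (Nat.ltb_spec N N); destruct (Nat.ltb_spec N (S N)); try lia. ring.
      destruct (Nat.ltb_spec n N); destruct (Nat.ltb_spec n (S N)); try lia; ring. }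
    rewrite (csum_ext _ (fun j => Cplus (Cmult (x j) (xi j n)) (Cmult (RtoC (-1))
        (Cmult (x j) (Cmult (RtoC (/ INR M)) (csum (fun i => Cmult (cpow w (S i)) (xi (j + m * S i) n)) M)))))).
    2:{ intros k _. rewrite <- (xi_minus_E M k n HM). ring. }
    rewrite csum_plus, csum_scal, XN.
    destruct (Nat.ltb_spec n N); ring. }
  assert (Ha : in_l2 a).
  { unfold in_l2. apply ex_series_le_R with (fun n => Cmod (x n) ^ 2); auto.
    intros n; split. apply Cmod_sq_ge0. unfold a. destruct (Nat.ltb_spec n N).
    rewrite Cmod_0. simpl. rewrite Rmult_0_l. apply Cmod_sq_ge0. lra. }
  assert (Sa : Series (fun n => Cmod (a n) ^ 2) < d ^ 2).
  { rewrite (Series_incr_n_aux _ N).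
    rewrite (Series_ext _ (fun k => Cmod (x (N + k)%nat) ^ 2)). auto.
    intros k. unfold a. destruct (Nat.ltb_spec (N + k) N); [lia|auto].
    intros k Hk. unfold a. destruct (Nat.ltb_spec k N); [|lia]. rewrite Cmod_0. simpl; ring. }
  assert (Qc : forall j n, Cmod (csum (fun i => Cmult (cpow w (S i)) (xi (j + m * S i) n)) M) <= 1).
  { intros j n. rewrite csum_prog. destruct (prog j n) as [[|i]|]; try (rewrite Cmod_0; lra).
    destruct (Nat.ltb_spec i M). rewrite cpow_mod; auto; lra. rewrite Cmod_0; lra. }
  assert (Qz : forall n, (N + m * M <= n)%nat -> q n = RtoC 0).
  { intros n Hn. unfold q. rewrite (csum_ext _ (fun _ => RtoC 0)). rewrite csum_const. ring.
    intros j Hj. rewrite csum_prog. destruct (prog j n) as [[|i]|] eqn:E; try ring.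
    apply prog_some in E. destruct (Nat.ltb_spec i M). nia. ring. }
  assert (Qb : forall n, Cmod (q n) <= B / INR M).
  { intros n. unfold q. eapply Rle_trans. apply csum_mod. unfold B, Rdiv.
    rewrite Rmult_comm, <- rsum_scal. apply rsum_le. intros j.
    rewrite !Cmod_mult, Cmod_R, Rabs_pos_eq by (apply Rlt_le, Rinv_0_lt_compat; auto).
    pose proof (Qc j n). pose proof (Cmod_ge_0 (x j)).
    assert (0 < / INR M) by (apply Rinv_0_lt_compat; auto).
    set (cc := Cmod (csum (fun i => Cmult (cpow w (S i)) (xi (j + m * S i) n)) M)) in *.
    set (ci := / INR M) in *.
    assert (0 <= ci * Cmod (x j) * (1 - cc)) by (apply Rmult_le_pos; [apply Rmult_le_pos|]; lra).
    nra. }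
  assert (Hq : in_l2 q) by (apply (in_l2_fin q (N + m * M)); auto).
  assert (Sq : Series (fun n => Cmod (q n) ^ 2) < d ^ 2).
  { eapply Rle_lt_trans. apply (series_fin_bound _ (N + m * M) ((B / INR M) ^ 2)).
    intros n; split. apply Cmod_sq_ge0. apply pow_incr. split. apply Cmod_ge_0. auto.
    intros n Hn. rewrite Qz by auto. rewrite Cmod_0. simpl; ring.
    rewrite plus_INR, mult_INR.
    assert (E1 : (INR N + INR m * INR M) * (B / INR M) ^ 2 <= (INR N + INR m) * B ^ 2 / INR M).
    { assert (E2 : (INR N + INR m * INR M) * (B / INR M) ^ 2 = (INR N / INR M + INR m) * B ^ 2 / INR M) by (field; lra).
      rewrite E2. unfold Rdiv. apply Rmult_le_compat_r. left; apply Rinv_0_lt_compat; auto.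
      apply Rmult_le_compat_r. apply pow2_ge_0.
      assert (INR N / INR M <= INR N).
      { unfold Rdiv. rewrite <- (Rmult_1_r (INR N)) at 2. apply Rmult_le_compat_l. apply pos_INR.
        rewrite <- Rinv_1. apply Rinv_le_contravar. lra. apply (le_INR 1); lia. }
      unfold Rdiv in H. lra. }
    eapply Rle_lt_trans. apply E1.
    apply (Rmult_lt_compat_r (d ^ 2 / INR M)) in HMbig. 2:{ apply Rdiv_lt_0_compat; auto. }
    replace ((INR N + INR m) * B ^ 2 / d ^ 2 * (d ^ 2 / INR M)) with ((INR N + INR m) * B ^ 2 / INR M) in HMbig by (field; lra).
    replace (INR M * (d ^ 2 / INR M)) with (d ^ 2) in HMbig by (field; lra). auto. }
  rewrite Exz. eapply Rle_lt_trans. apply l2norm_add_le; auto.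
  assert (l2norm a < d) by (apply l2_small_sq; auto).
  assert (l2norm q < d) by (apply l2_small_sq; auto).
  replace eps with (sqrt 2 * (d + d)) by (unfold d; field; lra).
  apply Rmult_lt_compat_l; lra.
Qed.

Lemma main_sec : time_operator Nop (Lmw lg m w) (Dm lg m w) /\ dense (Dm lg m w).
Proof.
  split; [|apply density].
  split; [|split; [|split; [|split]]].
  - split.
    + intros x Hx eps Heps. destruct (density x Hx eps Heps) as [y [Dy Hy]].
      exists y. split; auto. apply Dy.
    + intros x y Hx Hy. apply T_herm; auto.
  - split; [apply D_zero|split].
    + intros; apply D_add; auto.
    + intros; apply D_scal; auto.
  - exists (dvec 0). split. apply dvec_D.
    intros E. assert (E0 := f_equal (fun v => v 0%nat) E). cbv beta in E0.
    assert (D0 : dvec 0%nat 0%nat = RtoC 1).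
    { unfold dvec, vsub, vscal, xi. rewrite Nat.eqb_refl.
      destruct (Nat.eqb_spec 0 (0 + m)); [lia|]. ring. }
    rewrite D0 in E0. unfold vzero, RtoC in E0. injection E0. lra.
  - intros x Hx. exact Hx.
  - intros x Hx. apply commutator_D; auto.
Qed.

End Basis.


Theorem mainTheorem18 :
  forall (lg : C -> C), is_log lg ->
  forall (w : C) (m : nat), Cmod w = 1 -> (1 <= m)%nat ->
  time_operator Nop (Lmw lg m w)
    (fun x => dom (op_comp Nop (Lmw lg m w)) x /\ dom (op_comp (Lmw lg m w) Nop) x) /\
  dense (fun x => dom (op_comp Nop (Lmw lg m w)) x /\ dom (op_comp (Lmw lg m w) Nop) x).
Proof.
  intros lg Hl w m Hw Hm. exact (main_sec lg m w Hl Hw Hm).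
Qed.
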